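(* Let $\mathcal{A}\subset\mathbb{Z}^2$ be a finite set whose convex hull $\Delta_{\mathcal{A}}$ is a polygon, and let $f\colon\mathcal{A}\to\mathbb{R}^2$ be an assignment of control points. The following are equivalent: <ul> <li>for every choice of positive weights $w\in\mathbb{R}^{\mathcal{A}}_{>}$, the toric Bézier patch $F_w\colon\Delta_{\mathcal{A}}\to\mathbb{R}^2$ is injective on all of $\Delta_{\mathcal{A}}$;</li> <li>$f$ is compatible.</li> </ul>
   Context: Let $\mathcal{A}\subset\mathbb{Z}^2$ be finite and write $\Delta_{\mathcal{A}}$ for its convex hull, a lattice polygon. Write it via its edge inequalities as $\Delta_{\mathcal{A}}=\{x\in\mathbb{R}^2 : h_i(x)\ge 0,\ i=1,\dots,\ell\}$. Here there is one $h_i$ for each edge, and $h_i(x,y)=a_ix+b_iy+c_i$ with integers $a_i,b_i,c_i$ and $\gcd(a_i,b_i)=1$. For $\mathbf{a}\in\mathcal{A}$ the toric Bernstein polynomial is $\beta_{\mathbf{a}}(x)=\prod_{i=1}^{\ell} h_i(x)^{h_i(\mathbf{a})}$. Given control points $f\colon\mathcal{A}\to\mathbb{R}^d$ and weights $w=(w_{\mathbf{a}})\in\mathbb{R}^{\mathcal{A}}_{>}$ (all $w_{\mathbf{a}}>0$), the toric Bézier patch is $$F_w(x)=\frac{\sum_{\mathbf{a}\in\mathcal{A}} w_{\mathbf{a}} f(\mathbf{a})\beta_{\mathbf{a}}(x)}{\sum_{\mathbf{a}\in\mathcal{A}} w_{\mathbf{a}}\beta_{\mathbf{a}}(x)},\qquad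 x\in\Delta_{\mathcal{A}}.$$ An affinely independent triple $p_0,p_1,p_2\in\mathbb{R}^2$ has orientation given by the sign of $\det(p_1-p_0,\,p_2-p_0)$; it is positively oriented if this determinant is positive. An assignment $f\colon\mathcal{A}\to\mathbb{R}^2$ is weakly compatible if both of the following hold: <ol> <li>There exist affinely independent $\mathbf{a}_0,\mathbf{a}_1,\mathbf{a}_2\in\mathcal{A}$ such that $f(\mathbf{a}_0),f(\mathbf{a}_1),f(\mathbf{a}_2)$ are affinely independent.</li> <li>For any affinely independent $\mathbf{a}'_0,\mathbf{a}'_1,\mathbf{a}'_2\in\mathcal{A}$ with the same orientation as $\mathbf{a}_0,\mathbf{a}_1,\mathbf{a}_2$: if $f(\mathbf{a}'_0),f(\mathbf{a}'_1),f(\mathbf{a}'_2)$ are affinely independent, then they have the same orientation as $f(\mathbf{a}_0),f(\mathbf{a}_1),f(\mathbf{a}_2)$.</li> </ol> The assignment $f$ is compatible if it is weakly compatible and no two distinct vertices of $\Delta_{\mathcal{A}}$ have the same image under $f$. *)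

(* Defs.v *)
From Stdlib Require Import Reals ZArith List.
Open Scope R_scope.

Definition lpt := (Z * Z)%type.
Definition pt := (R * R)%type.

Definition lpt_eq_dec : forall a b : lpt, {a = b} + {a <> b}.
Proof. decide equality; apply Z.eq_dec. Defined.

Definition toR (a : lpt) : pt := (IZR (fst a), IZR (snd a)).

Fixpoint sumR {T : Type} (l : list T) (g : T -> R) : R :=
  match l with nil => 0 | x :: l' => g x + sumR l' g end.
Fixpoint prodR {T : Type} (l : list T) (g : T -> R) : R :=
  match l with nil => 1 | x :: l' => g x * prodR l' g end.

Definition in_hull (A : list lpt) (x : pt) : Prop :=
  exists lam : lpt -> R,
    (forall a, In a A -> 0 <= lam a) /\
    sumR A lam = 1 /\
    fst x = sumR A (fun a => lam a * IZR (fst a)) /\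
    snd x = sumR A (fun a => lam a * IZR (snd a)).

Definition aform := (Z * Z * Z)%type.
Definition hval (h : aform) (x : pt) : R :=
  let '((a, b), c) := h in IZR a * fst x + IZR b * snd x + IZR c.
Definition hvalZ (h : aform) (p : lpt) : Z :=
  let '((a, b), c) := h in (a * fst p + b * snd p + c)%Z.

Definition orient (p0 p1 p2 : pt) : R :=
  (fst p1 - fst p0) * (snd p2 - snd p0) - (snd p1 - snd p0) * (fst p2 - fst p0).

Definition is_polygon (A : list lpt) : Prop :=
  exists a0 a1 a2, In a0 A /\ In a1 A /\ In a2 A /\
    orient (toR a0) (toR a1) (toR a2) <> 0.

(* H is the list of edge inequalities of Delta_A: one primitive form per edge
   (no repetitions), each form vanishing on an edge (two distinct points of A),
   and Delta_A = { x | h_i(x) >= 0 for all i }. *)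
Definition edge_data (A : list lpt) (H : list aform) : Prop :=
  NoDup H /\
  (forall h, In h H -> let '((a, b), _) := h in Z.gcd a b = 1%Z) /\
  (forall h, In h H -> exists p q, In p A /\ In q A /\ p <> q /\
        hvalZ h p = 0%Z /\ hvalZ h q = 0%Z) /\
  (forall x : pt, in_hull A x <-> (forall h, In h H -> 0 <= hval h x)).

(* Toric Bernstein polynomial beta_a(x) = prod_i h_i(x)^{h_i(a)}
   (the exponents h_i(a) are >= 0 for a in A). *)
Definition beta (H : list aform) (a : lpt) (x : pt) : R :=
  prodR H (fun h => hval h x ^ Z.to_nat (hvalZ h a)).

Definition patch (A : list lpt) (H : list aform) (w : lpt -> R) (f : lpt -> pt)
    (x : pt) : pt :=
  let den := sumR A (fun a => w a * beta H a x) in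
  (sumR A (fun a => w a * fst (f a) * beta H a x) / den,
   sumR A (fun a => w a * snd (f a) * beta H a x) / den).

Definition pos_weights (A : list lpt) (w : lpt -> R) : Prop :=
  forall a, In a A -> 0 < w a.

Definition injective_on_hull (A : list lpt) (F : pt -> pt) : Prop :=
  forall x y, in_hull A x -> in_hull A y -> F x = F y -> x = y.

Definition weakly_compatible (A : list lpt) (f : lpt -> pt) : Prop :=
  exists a0 a1 a2, In a0 A /\ In a1 A /\ In a2 A /\
    orient (toR a0) (toR a1) (toR a2) <> 0 /\
    orient (f a0) (f a1) (f a2) <> 0 /\
    forall b0 b1 b2, In b0 A -> In b1 A -> In b2 A ->
      orient (toR a0) (toR a1) (toR a2) * orient (toR b0) (toR b1) (toR b2) > 0 ->
      orient (f b0) (f b1) (f b2) <> 0 ->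
      orient (f a0) (f a1) (f a2) * orient (f b0) (f b1) (f b2) > 0.

Definition is_vertex (A : list lpt) (v : lpt) : Prop :=
  In v A /\ ~ in_hull (remove lpt_eq_dec v A) (toR v).

Definition compatible (A : list lpt) (f : lpt -> pt) : Prop :=
  weakly_compatible A f /\
  forall v1 v2, is_vertex A v1 -> is_vertex A v2 -> v1 <> v2 -> f v1 <> f v2.

(* Main.v *)
Require Import Defs.
From Stdlib Require Import Reals ZArith List Lra Lia Psatz Classical ClassicalEpsilon FunctionalExtensionality.
Open Scope R_scope.

Section Sums.
Context {T : Type}.

Lemma sumR_ext (l : list T) (g1 g2 : T -> R) :
  (forall a, In a l -> g1 a = g2 a) -> sumR l g1 = sumR l g2.
Proof.
  induction l as [|x l IH]; simpl; intros Hg; auto.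
  rewrite Hg by auto. rewrite IH; auto.
Qed.

Lemma sumR_plus (l : list T) (g1 g2 : T -> R) :
  sumR l (fun a => g1 a + g2 a) = sumR l g1 + sumR l g2.
Proof. induction l; simpl; lra. Qed.

Lemma sumR_minus (l : list T) (g1 g2 : T -> R) :
  sumR l (fun a => g1 a - g2 a) = sumR l g1 - sumR l g2.
Proof. induction l; simpl; lra. Qed.

Lemma sumR_scal (l : list T) (c : R) (g : T -> R) :
  sumR l (fun a => c * g a) = c * sumR l g.
Proof. induction l; simpl; [ring|rewrite IHl; ring]. Qed.

Lemma sumR_scal_r (l : list T) (c : R) (g : T -> R) :
  sumR l (fun a => g a * c) = sumR l g * c.
Proof. induction l; simpl; [ring|rewrite IHl; ring]. Qed.

Lemma sumR_const0 (l : list T) : sumR l (fun _ => 0) = 0.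
Proof. induction l; simpl; lra. Qed.

Lemma sumR_nonneg (l : list T) (g : T -> R) :
  (forall a, In a l -> 0 <= g a) -> 0 <= sumR l g.
Proof.
  induction l as [|x l IH]; simpl; intros Hg; [lra|].
  assert (0 <= g x) by auto. assert (0 <= sumR l g) by auto. lra.
Qed.

Lemma sumR_pos (l : list T) (g : T -> R) (t : T) :
  (forall a, In a l -> 0 <= g a) -> In t l -> 0 < g t -> 0 < sumR l g.
Proof.
  induction l as [|x l IH]; simpl; intros Hg Ht Hp; [tauto|].
  destruct Ht as [<-|Ht].
  - assert (0 <= sumR l g) by (apply sumR_nonneg; auto). lra.
  - assert (0 <= g x) by auto. assert (0 < sumR l g) by auto. lra.
Qed.

Lemma sumR_zero_nonneg (l : list T) (g : T -> R) :
  (forall a, In a l -> 0 <= g a) -> sumR l g = 0 -> forall a, In a l -> g a = 0.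
Proof.
  intros Hg Hs a Ha.
  destruct (Req_dec (g a) 0) as [E|E]; auto.
  assert (0 < sumR l g) by (apply (sumR_pos l g a); auto;
    assert (0 <= g a) by auto; lra). lra.
Qed.

Lemma sumR_le (l : list T) (g1 g2 : T -> R) :
  (forall a, In a l -> g1 a <= g2 a) -> sumR l g1 <= sumR l g2.
Proof.
  induction l as [|x l IH]; simpl; intros Hg; [lra|].
  assert (g1 x <= g2 x) by auto. assert (sumR l g1 <= sumR l g2) by auto. lra.
Qed.

Lemma sumR_abs (l : list T) (g : T -> R) :
  Rabs (sumR l g) <= sumR l (fun a => Rabs (g a)).
Proof.
  induction l as [|x l IH]; simpl.
  - rewrite Rabs_R0; lra.
  - eapply Rle_trans; [apply Rabs_triang|]. lra.
Qed.

Lemma sumR_swap {U : Type} (l : list T) (l' : list U) (F : T -> U -> R) :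
  sumR l (fun a => sumR l' (fun b => F a b)) =
  sumR l' (fun b => sumR l (fun a => F a b)).
Proof.
  induction l as [|x l IH]; simpl.
  - induction l' as [|y l' IH']; simpl; auto. rewrite <- IH'. ring.
  - rewrite IH. clear IH. induction l' as [|y l' IH']; simpl; [ring|]. rewrite <- IH'. ring.
Qed.

Lemma sumR_single (l : list T) (g : T -> R) (t : T) :
  NoDup l -> In t l -> (forall a, In a l -> a <> t -> g a = 0) -> sumR l g = g t.
Proof.
  induction l as [|x l IH]; simpl; intros Hnd Ht Hz; [tauto|].
  inversion Hnd; subst.
  destruct Ht as [<-|Ht].
  - rewrite (sumR_ext l g (fun _ => 0)).
    + rewrite sumR_const0; ring.
    + intros a Ha. apply Hz; auto. intro E; subst; contradiction.
  - rewrite IH; auto.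
    rewrite Hz; [ring|auto|]. intro E; subst; contradiction.
Qed.

Lemma sumR_in_le (l : list T) (g : T -> R) (t : T) :
  (forall a, In a l -> 0 <= g a) -> In t l -> g t <= sumR l g.
Proof.
  induction l as [|x l IH]; simpl; intros Hg Ht; [tauto|].
  destruct Ht as [<-|Ht].
  - assert (0 <= sumR l g) by (apply sumR_nonneg; auto). lra.
  - assert (0 <= g x) by auto. assert (g t <= sumR l g) by auto. lra.
Qed.

Lemma prodR_zero (l : list T) (g : T -> R) (t : T) :
  In t l -> g t = 0 -> prodR l g = 0.
Proof.
  induction l as [|x l IH]; simpl; intros Ht Hz; [tauto|].
  destruct Ht as [<-|Ht]; [rewrite Hz; ring|rewrite IH; auto; ring].
Qed.

Lemma prodR_pos (l : list T) (g : T -> R) :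
  (forall a, In a l -> 0 < g a) -> 0 < prodR l g.
Proof.
  induction l as [|x l IH]; simpl; intros Hg; [lra|].
  apply Rmult_lt_0_compat; auto.
Qed.

Lemma prodR_nonneg (l : list T) (g : T -> R) :
  (forall a, In a l -> 0 <= g a) -> 0 <= prodR l g.
Proof.
  induction l as [|x l IH]; simpl; intros Hg; [lra|].
  apply Rmult_le_pos; auto.
Qed.

End Sums.

Definition det3 (a1 a2 a3 b1 b2 b3 c1 c2 c3 : R) : R :=
  a1 * (b2 * c3 - b3 * c2) - a2 * (b1 * c3 - b3 * c1) + a3 * (b1 * c2 - b2 * c1).

Section CB.
Context {T : Type}.
Variable l : list T.

Definition S3 (F : T -> T -> T -> R) : R :=
  sumR l (fun a => sumR l (fun b => sumR l (fun c => F a b c))).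

Lemma S3_ext F G : (forall a b c, F a b c = G a b c) -> S3 F = S3 G.
Proof.
  intros E; unfold S3. apply sumR_ext; intros; apply sumR_ext; intros; apply sumR_ext; intros; auto.
Qed.

Lemma S3_plus F G : S3 (fun a b c => F a b c + G a b c) = S3 F + S3 G.
Proof.
  unfold S3. rewrite <- sumR_plus. apply sumR_ext; intros.
  rewrite <- sumR_plus. apply sumR_ext; intros. apply sumR_plus.
Qed.

Lemma S3_scal k F : S3 (fun a b c => k * F a b c) = k * S3 F.
Proof.
  unfold S3. rewrite <- sumR_scal. apply sumR_ext; intros.
  rewrite <- sumR_scal. apply sumR_ext; intros. apply sumR_scal.
Qed.

Lemma S3_opp F : - S3 F = S3 (fun a b c => - F a b c).
Proof.
  replace (- S3 F) with (-1 * S3 F) by ring. rewrite <- S3_scal. apply S3_ext; intros; ring.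
Qed.

Lemma S3_swap12 F : S3 F = S3 (fun a b c => F b a c).
Proof. unfold S3. apply sumR_swap. Qed.

Lemma S3_swap23 F : S3 F = S3 (fun a b c => F a c b).
Proof. unfold S3. apply sumR_ext; intros. apply sumR_swap. Qed.

Lemma det3_row1_sum (X1 X2 X3 : T -> R) b1 b2 b3 c1 c2 c3 :
  det3 (sumR l X1) (sumR l X2) (sumR l X3) b1 b2 b3 c1 c2 c3 =
  sumR l (fun a => det3 (X1 a) (X2 a) (X3 a) b1 b2 b3 c1 c2 c3).
Proof. induction l as [|x l' IH]; simpl; unfold det3 in *; [ring|]. rewrite <- IH. ring. Qed.

Lemma det3_row2_sum (X1 X2 X3 : T -> R) a1 a2 a3 c1 c2 c3 :
  det3 a1 a2 a3 (sumR l X1) (sumR l X2) (sumR l X3) c1 c2 c3 =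
  sumR l (fun b => det3 a1 a2 a3 (X1 b) (X2 b) (X3 b) c1 c2 c3).
Proof. induction l as [|x l' IH]; simpl; unfold det3 in *; [ring|]. rewrite <- IH. ring. Qed.

Lemma det3_row3_sum (X1 X2 X3 : T -> R) a1 a2 a3 b1 b2 b3 :
  det3 a1 a2 a3 b1 b2 b3 (sumR l X1) (sumR l X2) (sumR l X3) =
  sumR l (fun c => det3 a1 a2 a3 b1 b2 b3 (X1 c) (X2 c) (X3 c)).
Proof. induction l as [|x l' IH]; simpl; unfold det3 in *; [ring|]. rewrite <- IH. ring. Qed.

Variables p1 p2 p3 q1 q2 q3 : T -> R.

Definition Mx i j := sumR l (fun a =>
  (match i with 1%nat => p1 a | 2%nat => p2 a | _ => p3 a end) *
  (match j with 1%nat => q1 a | 2%nat => q2 a | _ => q3 a end)).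

Definition Gq a b c := det3 (q1 a) (q2 a) (q3 a) (q1 b) (q2 b) (q3 b) (q1 c) (q2 c) (q3 c).
Definition Gp a b c := det3 (p1 a) (p2 a) (p3 a) (p1 b) (p2 b) (p3 b) (p1 c) (p2 c) (p3 c).

Lemma cauchy_binet :
  6 * det3 (Mx 1 1) (Mx 1 2) (Mx 1 3) (Mx 2 1) (Mx 2 2) (Mx 2 3) (Mx 3 1) (Mx 3 2) (Mx 3 3)
  = S3 (fun a b c => Gp a b c * Gq a b c).
Proof.
  assert (E : det3 (Mx 1 1) (Mx 1 2) (Mx 1 3) (Mx 2 1) (Mx 2 2) (Mx 2 3) (Mx 3 1) (Mx 3 2) (Mx 3 3)
    = S3 (fun a b c => p1 a * p2 b * p3 c * Gq a b c)).
  { unfold Mx, S3. rewrite det3_row1_sum. apply sumR_ext; intros a _.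
    rewrite det3_row2_sum. apply sumR_ext; intros b _.
    rewrite det3_row3_sum. apply sumR_ext; intros c _.
    unfold Gq, det3. ring. }
  rewrite E.
  set (m := fun a b c => p1 a * p2 b * p3 c).
  assert (Ga : forall a b c, Gq b a c = - Gq a b c) by (intros; unfold Gq, det3; ring).
  assert (Gb : forall a b c, Gq a c b = - Gq a b c) by (intros; unfold Gq, det3; ring).
  set (T0 := S3 (fun a b c => p1 a * p2 b * p3 c * Gq a b c)).
  assert (E2 : T0 = - S3 (fun a b c => m b a c * Gq a b c)).
  { unfold T0. rewrite S3_swap12. rewrite S3_opp. apply S3_ext; intros.
    rewrite Ga. unfold m. ring. }
  assert (E3 : T0 = - S3 (fun a b c => m a c b * Gq a b c)).
  { unfold T0. rewrite S3_swap23. rewrite S3_opp. apply S3_ext; intros.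
    rewrite Gb. unfold m. ring. }
  assert (E4 : T0 = S3 (fun a b c => m b c a * Gq a b c)).
  { rewrite E3. rewrite S3_swap12. rewrite S3_opp. apply S3_ext; intros.
    rewrite Ga. ring. }
  assert (E5 : T0 = S3 (fun a b c => m c a b * Gq a b c)).
  { rewrite E2. rewrite S3_swap23. rewrite S3_opp. apply S3_ext; intros.
    rewrite Gb. ring. }
  assert (E6 : T0 = - S3 (fun a b c => m c b a * Gq a b c)).
  { rewrite E4. rewrite S3_swap23. rewrite S3_opp. apply S3_ext; intros.
    rewrite Gb. ring. }
  assert (E1 : T0 = S3 (fun a b c => m a b c * Gq a b c)) by reflexivity.
  transitivity (S3 (fun a b c => m a b c * Gq a b c) - S3 (fun a b c => m b a c * Gq a b c)
     - S3 (fun a b c => m a c b * Gq a b c) + S3 (fun a b c => m b c a * Gq a b c)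
     + S3 (fun a b c => m c a b * Gq a b c) - S3 (fun a b c => m c b a * Gq a b c)).
  { lra. }
  unfold Rminus. rewrite !S3_opp.
  rewrite <- !S3_plus. apply S3_ext; intros. unfold m, Gp, det3. ring.
Qed.

End CB.

Lemma det3_kernel (a1 a2 a3 b1 b2 b3 c1 c2 c3 x1 x2 x3 : R) :
  a1*x1 + a2*x2 + a3*x3 = 0 -> b1*x1 + b2*x2 + b3*x3 = 0 -> c1*x1 + c2*x2 + c3*x3 = 0 ->
  (x1 <> 0 \/ x2 <> 0 \/ x3 <> 0) -> det3 a1 a2 a3 b1 b2 b3 c1 c2 c3 = 0.
Proof.
  intros Ha Hb Hc Hx.
  assert (E1 : det3 a1 a2 a3 b1 b2 b3 c1 c2 c3 * x1 =
    (b2*c3 - b3*c2) * (a1*x1 + a2*x2 + a3*x3) - (a2*c3 - a3*c2) * (b1*x1 + b2*x2 + b3*x3)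
    + (a2*b3 - a3*b2) * (c1*x1 + c2*x2 + c3*x3)) by (unfold det3; ring).
  assert (E2 : det3 a1 a2 a3 b1 b2 b3 c1 c2 c3 * x2 =
    -(b1*c3 - b3*c1) * (a1*x1 + a2*x2 + a3*x3) + (a1*c3 - a3*c1) * (b1*x1 + b2*x2 + b3*x3)
    - (a1*b3 - a3*b1) * (c1*x1 + c2*x2 + c3*x3)) by (unfold det3; ring).
  assert (E3 : det3 a1 a2 a3 b1 b2 b3 c1 c2 c3 * x3 =
    (b1*c2 - b2*c1) * (a1*x1 + a2*x2 + a3*x3) - (a1*c2 - a2*c1) * (b1*x1 + b2*x2 + b3*x3)
    + (a1*b2 - a2*b1) * (c1*x1 + c2*x2 + c3*x3)) by (unfold det3; ring).
  rewrite Ha, Hb, Hc in *.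
  destruct Hx as [H|[H|H]].
  - apply (Rmult_eq_reg_r x1); auto. rewrite E1. ring.
  - apply (Rmult_eq_reg_r x2); auto. rewrite E2. ring.
  - apply (Rmult_eq_reg_r x3); auto. rewrite E3. ring.
Qed.

Definition nx (h : aform) : R := let '((a, b), c) := h in IZR a.
Definition ny (h : aform) : R := let '((a, b), c) := h in IZR b.
Definition cz (h : aform) : R := let '((a, b), c) := h in IZR c.

Lemma hval_eq h p : hval h p = nx h * fst p + ny h * snd p + cz h.
Proof. destruct h as [[a b] c]; reflexivity. Qed.

Lemma hval_toR h a : hval h (toR a) = IZR (hvalZ h a).
Proof. destruct h as [[x y] c]; destruct a as [p q]; simpl.
  rewrite plus_IZR, plus_IZR, !mult_IZR. reflexivity. Qed.

Lemma toR_inj a b : toR a = toR b -> a = b.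
Proof.
  destruct a as [a1 a2], b as [b1 b2]; unfold toR; simpl; intros E.
  inversion E. apply eq_IZR in H0. apply eq_IZR in H1. subst; auto.
Qed.

Section Geo.
Variable A : list lpt.
Variable H : list aform.
Hypothesis Hnd : NoDup A.
Hypothesis Hed : edge_data A H.

Lemma ed_hull x : in_hull A x <-> (forall h, In h H -> 0 <= hval h x).
Proof. destruct Hed as [_ [_ [_ E]]]. apply E. Qed.

Lemma in_hull_pt (a : lpt) : In a A -> in_hull A (toR a).
Proof.
  intros Ha. exists (fun b => if lpt_eq_dec b a then 1 else 0).
  split; [intros b _; destruct (lpt_eq_dec b a); lra|].
  split; [|split].
  - rewrite (sumR_single A _ a); auto; [destruct (lpt_eq_dec a a); [auto|congruence]|].
    intros b _ Hb; destruct (lpt_eq_dec b a); [congruence|auto].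
  - rewrite (sumR_single A _ a); auto; [destruct (lpt_eq_dec a a); [simpl; ring|congruence]|].
    intros b _ Hb; destruct (lpt_eq_dec b a); [congruence|ring].
  - rewrite (sumR_single A _ a); auto; [destruct (lpt_eq_dec a a); [simpl; ring|congruence]|].
    intros b _ Hb; destruct (lpt_eq_dec b a); [congruence|ring].
Qed.

Lemma hval_A_nonneg h a : In h H -> In a A -> 0 <= hval h (toR a).
Proof. intros Hh Ha. apply (proj1 (ed_hull (toR a))); auto. apply in_hull_pt; auto. Qed.

Lemma hvalZ_A_nonneg h a : In h H -> In a A -> (0 <= hvalZ h a)%Z.
Proof. intros Hh Ha. apply le_IZR. rewrite <- hval_toR. apply hval_A_nonneg; auto. Qed.

Lemma hull_hval (l : list lpt) (lam : lpt -> R) x h :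
  sumR l lam = 1 ->
  fst x = sumR l (fun a => lam a * IZR (fst a)) ->
  snd x = sumR l (fun a => lam a * IZR (snd a)) ->
  hval h x = sumR l (fun a => lam a * hval h (toR a)).
Proof.
  intros E1 E2 E3. rewrite hval_eq. rewrite E2, E3.
  rewrite (sumR_ext l (fun a => lam a * hval h (toR a))
     (fun a => nx h * (lam a * IZR (fst a)) + ny h * (lam a * IZR (snd a)) + cz h * lam a)).
  - rewrite !sumR_plus, !sumR_scal, E1. ring.
  - intros a _. rewrite hval_eq. unfold toR; simpl. ring.
Qed.

Definition inS (x : pt) (a : lpt) : Prop :=
  forall h, In h H -> hval h x = 0 -> hvalZ h a = 0%Z.

Lemma support_inS (l : list lpt) (lam : lpt -> R) x a :
  incl l A ->
  (forall b, In b l -> 0 <= lam b) -> sumR l lam = 1 ->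
  fst x = sumR l (fun a => lam a * IZR (fst a)) ->
  snd x = sumR l (fun a => lam a * IZR (snd a)) ->
  In a l -> 0 < lam a -> inS x a.
Proof.
  intros Hincl Hl E1 E2 E3 Ha Hpos h Hh Hx.
  rewrite (hull_hval l lam x h E1 E2 E3) in Hx.
  assert (Z : lam a * hval h (toR a) = 0).
  { apply (sumR_zero_nonneg l (fun a => lam a * hval h (toR a))); auto.
    intros b Hb. apply Rmult_le_pos; auto. apply hval_A_nonneg; auto. }
  apply Rmult_integral in Z. destruct Z as [Z|Z]; [lra|].
  rewrite hval_toR in Z. apply eq_IZR in Z. auto.
Qed.

Lemma inS_exists x : in_hull A x -> exists a, In a A /\ inS x a.
Proof.
  intros [lam [Hl [E1 [E2 E3]]]].
  destruct (classic (exists a, In a A /\ 0 < lam a)) as [[a [Ha Hp]]|Hn].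
  - exists a; split; auto. apply (support_inS A lam x a); auto. intros b; auto.
  - exfalso. assert (sumR A lam = 0).
    { rewrite (sumR_ext A lam (fun _ => 0)). apply sumR_const0.
      intros a Ha. assert (0 <= lam a) by auto.
      destruct (Req_dec (lam a) 0); auto. exfalso; apply Hn; exists a; split; auto; lra. }
    lra.
Qed.

Lemma hull_bound x : in_hull A x ->
  Rabs (fst x) <= sumR A (fun a => Rabs (IZR (fst a))) /\
  Rabs (snd x) <= sumR A (fun a => Rabs (IZR (snd a))).
Proof.
  intros [lam [Hl [E1 [E2 E3]]]].
  assert (Hle : forall a, In a A -> lam a <= 1).
  { intros a Ha. rewrite <- E1. apply (sumR_in_le A lam a); auto. }
  split.
  - rewrite E2. eapply Rle_trans; [apply sumR_abs|]. apply sumR_le.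
    intros a Ha. rewrite Rabs_mult. rewrite (Rabs_right (lam a)) by (apply Rle_ge; auto).
    assert (0 <= Rabs (IZR (fst a))) by apply Rabs_pos. assert (0 <= lam a) by auto.
    specialize (Hle a Ha). nra.
  - rewrite E3. eapply Rle_trans; [apply sumR_abs|]. apply sumR_le.
    intros a Ha. rewrite Rabs_mult. rewrite (Rabs_right (lam a)) by (apply Rle_ge; auto).
    assert (0 <= Rabs (IZR (snd a))) by apply Rabs_pos. assert (0 <= lam a) by auto.
    specialize (Hle a Ha). nra.
Qed.

Hypothesis Hpoly : is_polygon A.

Lemma normals_span d1 d2 :
  (forall h, In h H -> nx h * d1 + ny h * d2 = 0) -> d1 = 0 /\ d2 = 0.
Proof.
  intros Hn.
  destruct Hpoly as [a0 [_ [_ [Ha0 _]]]].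
  assert (Hin : forall t, in_hull A (fst (toR a0) + t * d1, snd (toR a0) + t * d2)).
  { intros t. apply ed_hull. intros h Hh. rewrite hval_eq. simpl.
    pose proof (hval_A_nonneg h a0 Hh Ha0) as P. rewrite hval_eq in P.
    specialize (Hn h Hh). simpl in P.
    replace (nx h * (IZR (fst a0) + t * d1) + ny h * (IZR (snd a0) + t * d2) + cz h)
      with (nx h * IZR (fst a0) + ny h * IZR (snd a0) + cz h + t * (nx h * d1 + ny h * d2)) by ring.
    rewrite Hn. lra. }
  set (B1 := sumR A (fun a => Rabs (IZR (fst a)))).
  set (B2 := sumR A (fun a => Rabs (IZR (snd a)))).
  split.
  - destruct (Req_dec d1 0) as [E|E]; auto. exfalso.
    set (t := (B1 + 1 + Rabs (IZR (fst a0))) / d1).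
    destruct (hull_bound _ (Hin t)) as [Hb _]. simpl in Hb. fold B1 in Hb.
    assert (Ht : t * d1 = B1 + 1 + Rabs (IZR (fst a0))) by (unfold t; field; auto).
    rewrite Ht in Hb.
    assert (0 <= Rabs (IZR (fst a0))) by apply Rabs_pos.
    assert (B1 + 1 <= Rabs (IZR (fst a0) + (B1 + 1 + Rabs (IZR (fst a0))))).
    { assert (-(IZR (fst a0)) <= Rabs (IZR (fst a0))) by (rewrite <- Rabs_Ropp; apply RRle_abs).
      assert (0 <= B1) by (apply sumR_nonneg; intros; apply Rabs_pos).
      rewrite Rabs_right; lra. }
    lra.
  - destruct (Req_dec d2 0) as [E|E]; auto. exfalso.
    set (t := (B2 + 1 + Rabs (IZR (snd a0))) / d2).
    destruct (hull_bound _ (Hin t)) as [_ Hb]. simpl in Hb. fold B2 in Hb.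
    assert (Ht : t * d2 = B2 + 1 + Rabs (IZR (snd a0))) by (unfold t; field; auto).
    rewrite Ht in Hb.
    assert (0 <= Rabs (IZR (snd a0))) by apply Rabs_pos.
    assert (B2 + 1 <= Rabs (IZR (snd a0) + (B2 + 1 + Rabs (IZR (snd a0))))).
    { assert (-(IZR (snd a0)) <= Rabs (IZR (snd a0))) by (rewrite <- Rabs_Ropp; apply RRle_abs).
      assert (0 <= B2) by (apply sumR_nonneg; intros; apply Rabs_pos).
      rewrite Rabs_right; lra. }
    lra.
Qed.

Lemma hval_equal_pts x y :
  (forall h, In h H -> hval h x = hval h y) -> x = y.
Proof.
  intros E. destruct (normals_span (fst y - fst x) (snd y - snd x)) as [E1 E2].
  - intros h Hh. specialize (E h Hh). rewrite !hval_eq in E. lra.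
  - destruct x, y; simpl in *. f_equal; lra.
Qed.

End Geo.

Section Beta.
Variable A : list lpt.
Variable H : list aform.
Hypothesis Hnd : NoDup A.
Hypothesis Hed : edge_data A H.

Lemma hx_nonneg x h : in_hull A x -> In h H -> 0 <= hval h x.
Proof. intros Hx Hh. apply (proj1 (ed_hull A H Hed x)); auto. Qed.

Lemma beta_nonneg x a : in_hull A x -> 0 <= beta H a x.
Proof.
  intros Hx. unfold beta. apply prodR_nonneg. intros h Hh.
  apply pow_le. apply hx_nonneg; auto.
Qed.

Lemma beta_pos x a : in_hull A x -> In a A -> inS H x a -> 0 < beta H a x.
Proof.
  intros Hx Ha HS. unfold beta. apply prodR_pos. intros h Hh.
  destruct (Req_dec (hval h x) 0) as [E|E].
  - rewrite (HS h Hh E). simpl. lra.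
  - apply pow_lt. pose proof (hx_nonneg x h Hx Hh). lra.
Qed.

Lemma beta_zero x a : in_hull A x -> In a A -> ~ inS H x a -> beta H a x = 0.
Proof.
  intros Hx Ha HS. unfold inS in HS.
  apply not_all_ex_not in HS. destruct HS as [h HS].
  apply imply_to_and in HS. destruct HS as [Hh HS].
  apply imply_to_and in HS. destruct HS as [E HS].
  unfold beta. apply (prodR_zero H _ h Hh). rewrite E.
  apply pow_i. pose proof (hvalZ_A_nonneg A H Hnd Hed h a Hh Ha). lia.
Qed.

Lemma inS_dec x a : {inS H x a} + {~ inS H x a}.
Proof. apply excluded_middle_informative. Qed.

Lemma den_pos (w : lpt -> R) x : pos_weights A w -> in_hull A x ->
  0 < sumR A (fun a => w a * beta H a x).
Proof.
  intros Hw Hx. destruct (inS_exists A H Hnd Hed x Hx) as [a [Ha HS]].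
  apply (sumR_pos A _ a).
  - intros b Hb. apply Rmult_le_pos; [apply Rlt_le; auto|apply beta_nonneg; auto].
  - auto.
  - apply Rmult_lt_0_compat; [auto|apply beta_pos; auto].
Qed.

Definition Lc (x y : pt) (h : aform) : R :=
  if Rlt_dec 0 (hval h x) then if Rlt_dec 0 (hval h y) then ln (hval h y / hval h x) else 0 else 0.

Lemma beta_ratio_list (l : list aform) x y a :
  incl l H -> in_hull A x -> in_hull A y -> In a A -> inS H x a -> inS H y a ->
  prodR l (fun h => hval h y ^ Z.to_nat (hvalZ h a)) =
  prodR l (fun h => hval h x ^ Z.to_nat (hvalZ h a)) *
  exp (sumR l (fun h => Lc x y h * hval h (toR a))).
Proof.
  intros Hl Hx Hy Ha Sx Sy. induction l as [|h l IH]; simpl.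
  - rewrite exp_0. ring.
  - rewrite exp_plus. rewrite IH by (intros z Hz; apply Hl; simpl; auto).
    assert (Hh : In h H) by (apply Hl; simpl; auto).
    assert (F : hval h y ^ Z.to_nat (hvalZ h a) =
                hval h x ^ Z.to_nat (hvalZ h a) * exp (Lc x y h * hval h (toR a))).
    { pose proof (hvalZ_A_nonneg A H Hnd Hed h a Hh Ha) as Hz.
      destruct (Z.eq_dec (hvalZ h a) 0) as [Z0|Z0].
      - rewrite hval_toR, Z0. simpl. rewrite Rmult_0_r, exp_0. ring.
      - assert (Px : 0 < hval h x).
        { pose proof (hx_nonneg x h Hx Hh). destruct (Req_dec (hval h x) 0) as [E|E].
          - exfalso; apply Z0; apply Sx; auto.
          - lra. }
        assert (Py : 0 < hval h y).
        { pose proof (hx_nonneg y h Hy Hh). destruct (Req_dec (hval h y) 0) as [E|E].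
          - exfalso; apply Z0; apply Sy; auto.
          - lra. }
        unfold Lc. destruct (Rlt_dec 0 (hval h x)); [|lra].
        destruct (Rlt_dec 0 (hval h y)); [|lra].
        assert (En : IZR (hvalZ h a) = INR (Z.to_nat (hvalZ h a))).
        { rewrite INR_IZR_INZ. rewrite Z2Nat.id by lia. reflexivity. }
        rewrite hval_toR, En. set (n := Z.to_nat (hvalZ h a)).
        rewrite (Rmult_comm (ln _) (INR n)).
        change (exp (INR n * ln (hval h y / hval h x)))
          with (Rpower (hval h y / hval h x) (INR n)).
        rewrite Rpower_pow by (apply Rdiv_lt_0_compat; auto).
        rewrite Rmult_comm. rewrite <- Rpow_mult_distr. f_equal. field. lra. }
    rewrite F. ring.
Qed.

Lemma beta_ratio x y a :
  in_hull A x -> in_hull A y -> In a A -> inS H x a -> inS H y a ->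
  beta H a y = beta H a x * exp (sumR H (fun h => Lc x y h * hval h (toR a))).
Proof. intros. unfold beta. apply beta_ratio_list; auto. intros z; auto. Qed.

End Beta.

Lemma orient_swap p0 p1 p2 : orient p1 p0 p2 = - orient p0 p1 p2.
Proof. unfold orient; ring. Qed.

Lemma wc_sign (A : list lpt) (f : lpt -> pt) :
  weakly_compatible A f ->
  exists s t0 t1 t2, In t0 A /\ In t1 A /\ In t2 A /\
    orient (toR t0) (toR t1) (toR t2) <> 0 /\ orient (f t0) (f t1) (f t2) <> 0 /\
    s = orient (f t0) (f t1) (f t2) * orient (toR t0) (toR t1) (toR t2) /\
    forall b0 b1 b2, In b0 A -> In b1 A -> In b2 A ->
      0 <= s * (orient (f b0) (f b1) (f b2) * orient (toR b0) (toR b1) (toR b2)).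
Proof.
  intros [a0 [a1 [a2 [H0 [H1 [H2 [HA [Hf Hall]]]]]]]].
  exists (orient (f a0) (f a1) (f a2) * orient (toR a0) (toR a1) (toR a2)), a0, a1, a2.
  repeat split; auto.
  intros b0 b1 b2 B0 B1 B2.
  set (oA := orient (toR a0) (toR a1) (toR a2)) in *.
  set (of := orient (f a0) (f a1) (f a2)) in *.
  destruct (Req_dec (orient (toR b0) (toR b1) (toR b2)) 0) as [E|E].
  { rewrite E. lra. }
  destruct (Req_dec (orient (f b0) (f b1) (f b2)) 0) as [E'|E'].
  { rewrite E'. lra. }
  destruct (Rlt_dec 0 (oA * orient (toR b0) (toR b1) (toR b2))) as [P|P].
  - specialize (Hall b0 b1 b2 B0 B1 B2 P E'). nra.
  - assert (P' : oA * orient (toR b1) (toR b0) (toR b2) > 0).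
    { rewrite orient_swap. assert (oA <> 0) by auto. 
      assert (oA * orient (toR b0) (toR b1) (toR b2) <> 0) by (apply Rmult_integral_contrapositive; auto).
      lra. }
    assert (E2 : orient (f b1) (f b0) (f b2) <> 0) by (rewrite orient_swap; lra).
    specialize (Hall b1 b0 b2 B1 B0 B2 P' E2). rewrite orient_swap in Hall.
    assert (oA * orient (toR b0) (toR b1) (toR b2) < 0).
    { assert (oA * orient (toR b0) (toR b1) (toR b2) <> 0) by (apply Rmult_integral_contrapositive; auto).
      lra. }
    nra.
Qed.

Lemma S3_zero_nonneg {T} (l : list T) F :
  (forall a b c, In a l -> In b l -> In c l -> 0 <= F a b c) -> S3 l F = 0 ->
  forall a b c, In a l -> In b l -> In c l -> F a b c = 0.
Proof.
  intros Hn Hs a b c Ha Hb Hc. unfold S3 in Hs.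
  assert (E1 := sumR_zero_nonneg l _ (fun a Ha => sumR_nonneg l _ (fun b Hb =>
      sumR_nonneg l _ (fun c Hc => Hn a b c Ha Hb Hc))) Hs a Ha). simpl in E1.
  assert (E2 := sumR_zero_nonneg l _ (fun b Hb =>
      sumR_nonneg l _ (fun c Hc => Hn a b c Ha Hb Hc)) E1 b Hb). simpl in E2.
  exact (sumR_zero_nonneg l _ (fun c Hc => Hn a b c Ha Hb Hc) E2 c Hc).
Qed.

Lemma AL (A : list lpt) (f : lpt -> pt) (D : lpt -> R) (l1 l2 k : R) :
  weakly_compatible A f ->
  (forall a, In a A -> 0 <= D a) ->
  (l1 <> 0 \/ l2 <> 0 \/ k <> 0) ->
  sumR A (fun a => D a * (l1 * IZR (fst a) + l2 * IZR (snd a) + k)) = 0 ->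
  sumR A (fun a => D a * (l1 * IZR (fst a) + l2 * IZR (snd a) + k) * fst (f a)) = 0 ->
  sumR A (fun a => D a * (l1 * IZR (fst a) + l2 * IZR (snd a) + k) * snd (f a)) = 0 ->
  forall a b c, In a A -> In b A -> In c A -> 0 < D a -> 0 < D b -> 0 < D c ->
    orient (f a) (f b) (f c) * orient (toR a) (toR b) (toR c) = 0.
Proof.
  intros Hwc HD Hl E3 E1 E2 a b c Ha Hb Hc Da Db Dc.
  destruct (wc_sign A f Hwc) as [s [t0 [t1 [t2 [_ [_ [_ [Ht1 [Ht2 [Hs Hall]]]]]]]]]].
  set (p1 := fun a => D a * fst (f a)). set (p2 := fun a => D a * snd (f a)).
  set (p3 := fun a => D a).
  set (q1 := fun a : lpt => IZR (fst a)). set (q2 := fun a : lpt => IZR (snd a)).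
  set (q3 := fun a : lpt => 1).
  pose proof (cauchy_binet A p1 p2 p3 q1 q2 q3) as CB.
  assert (Hdet : det3 (Mx A p1 p2 p3 q1 q2 q3 1 1) (Mx A p1 p2 p3 q1 q2 q3 1 2) (Mx A p1 p2 p3 q1 q2 q3 1 3)
       (Mx A p1 p2 p3 q1 q2 q3 2 1) (Mx A p1 p2 p3 q1 q2 q3 2 2) (Mx A p1 p2 p3 q1 q2 q3 2 3)
       (Mx A p1 p2 p3 q1 q2 q3 3 1) (Mx A p1 p2 p3 q1 q2 q3 3 2) (Mx A p1 p2 p3 q1 q2 q3 3 3) = 0).
  { apply (det3_kernel _ _ _ _ _ _ _ _ _ l1 l2 k); auto.
    - unfold Mx. rewrite <- E1. rewrite <- !sumR_scal_r. rewrite <- !sumR_plus.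
      apply sumR_ext; intros; unfold p1, q1, q2, q3; ring.
    - unfold Mx. rewrite <- E2. rewrite <- !sumR_scal_r. rewrite <- !sumR_plus.
      apply sumR_ext; intros; unfold p2, q1, q2, q3; ring.
    - unfold Mx. rewrite <- E3. rewrite <- !sumR_scal_r. rewrite <- !sumR_plus.
      apply sumR_ext; intros; unfold p3, q1, q2, q3; ring. }
  rewrite Hdet in CB.
  assert (HG : forall a b c, Gp p1 p2 p3 a b c * Gq q1 q2 q3 a b c =
     D a * D b * D c * (orient (f a) (f b) (f c) * orient (toR a) (toR b) (toR c))).
  { intros. unfold Gp, Gq, p1, p2, p3, q1, q2, q3, det3, orient, toR; simpl. ring. }
  assert (Z : S3 A (fun a b c => s * (Gp p1 p2 p3 a b c * Gq q1 q2 q3 a b c)) = 0).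
  { rewrite S3_scal. rewrite <- CB. ring. }
  pose proof (S3_zero_nonneg A (fun a b c => s * (Gp p1 p2 p3 a b c * Gq q1 q2 q3 a b c))) as ZZ.
  simpl in ZZ.
  assert (Hnn : forall a b c, In a A -> In b A -> In c A ->
    0 <= s * (Gp p1 p2 p3 a b c * Gq q1 q2 q3 a b c)).
  { intros a' b' c' A1 A2 A3. rewrite HG.
    specialize (Hall a' b' c' A1 A2 A3).
    assert (0 <= D a' * D b' * D c') by
      (apply Rmult_le_pos; [apply Rmult_le_pos|]; auto).
    replace (s * (D a' * D b' * D c' * (orient (f a') (f b') (f c') * orient (toR a') (toR b') (toR c'))))
      with ((D a' * D b' * D c') * (s * (orient (f a') (f b') (f c') * orient (toR a') (toR b') (toR c')))) by ring.
    apply Rmult_le_pos; auto. }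
  specialize (ZZ Hnn Z a b c Ha Hb Hc). rewrite HG in ZZ.
  assert (s <> 0) by (rewrite Hs; apply Rmult_integral_contrapositive; auto).
  assert (0 < D a * D b * D c) by (apply Rmult_lt_0_compat; [apply Rmult_lt_0_compat|]; auto).
  apply Rmult_integral in ZZ. destruct ZZ as [Z1|Z1]; [contradiction|].
  apply Rmult_integral in Z1. destruct Z1 as [Z1|Z1]; [lra|auto].
Qed.

Lemma ln_sign_prod a b : 0 < a -> 0 < b -> 0 <= ln (b / a) * (b - a) /\
  (ln (b / a) * (b - a) = 0 -> a = b).
Proof.
  intros Ha Hb.
  destruct (Rtotal_order a b) as [L|[E|L]].
  - assert (1 < b / a) by (apply (Rmult_lt_reg_r a); auto; unfold Rdiv; rewrite Rmult_assoc, Rinv_l; lra).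
    assert (0 < ln (b / a)) by (rewrite <- ln_1; apply ln_increasing; lra).
    split; [nra|]. intros Z. apply Rmult_integral in Z. lra.
  - subst. split; [|auto]. replace (b - b) with 0 by ring. lra.
  - assert (b / a < 1) by (apply (Rmult_lt_reg_r a); auto; unfold Rdiv; rewrite Rmult_assoc, Rinv_l; lra).
    assert (0 < b / a) by (apply Rdiv_lt_0_compat; auto).
    assert (ln (b / a) < 0) by (rewrite <- ln_1; apply ln_increasing; lra).
    split; [nra|]. intros Z. apply Rmult_integral in Z. lra.
Qed.

Section Inj.
Variable A : list lpt.
Variable H : list aform.
Variable f : lpt -> pt.
Variable w : lpt -> R.
Variables x y : pt.
Hypothesis Hnd : NoDup A.
Hypothesis Hed : edge_data A H.
Hypothesis Hpoly : is_polygon A.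
Hypothesis Hwc : weakly_compatible A f.
Hypothesis Hw : pos_weights A w.
Hypothesis Hx : in_hull A x.
Hypothesis Hy : in_hull A y.
Hypothesis Hpatch : patch A H w f x = patch A H w f y.
Hypothesis Hxy : x <> y.

Let Sx := sumR A (fun a => w a * beta H a x).
Let Sy := sumR A (fun a => w a * beta H a y).
Lemma Sx_pos : 0 < Sx. Proof. apply den_pos; auto. Qed.
Lemma Sy_pos : 0 < Sy. Proof. apply den_pos; auto. Qed.

Definition uu a := w a * beta H a x / Sx.
Definition vv a := w a * beta H a y / Sy.
Definition zz a := vv a - uu a.

Lemma zz_sum : sumR A zz = 0.
Proof.
  unfold zz, uu, vv. rewrite sumR_minus. unfold Rdiv. rewrite !sumR_scal_r.
  fold Sx Sy. pose proof Sx_pos; pose proof Sy_pos. field_simplify; lra.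
Qed.

Lemma zz_f1 : sumR A (fun a => zz a * fst (f a)) = 0.
Proof.
  unfold patch in Hpatch. injection Hpatch as E1 E2. fold Sx Sy in E1, E2.
  unfold zz, uu, vv.
  rewrite (sumR_ext A _ (fun a => (w a * fst (f a) * beta H a y) * / Sy - (w a * fst (f a) * beta H a x) * / Sx))
    by (intros; unfold Rdiv; ring).
  rewrite sumR_minus, !sumR_scal_r. unfold Rdiv in E1. rewrite E1. ring.
Qed.

Lemma zz_f2 : sumR A (fun a => zz a * snd (f a)) = 0.
Proof.
  unfold patch in Hpatch. injection Hpatch as E1 E2. fold Sx Sy in E1, E2.
  unfold zz, uu, vv.
  rewrite (sumR_ext A _ (fun a => (w a * snd (f a) * beta H a y) * / Sy - (w a * snd (f a) * beta H a x) * / Sx))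
    by (intros; unfold Rdiv; ring).
  rewrite sumR_minus, !sumR_scal_r. unfold Rdiv in E2. rewrite E2. ring.
Qed.

Definition ix (p : pt) (h : aform) : R := if Req_EM_T (hval h p) 0 then 1 else 0.
Definition pI (p : pt) (a : lpt) : R := sumR H (fun h => ix p h * hval h (toR a)).

Lemma pI_nonneg p a : In a A -> 0 <= pI p a.
Proof.
  intros Ha. apply sumR_nonneg. intros h Hh. unfold ix.
  destruct (Req_EM_T (hval h p) 0); [rewrite Rmult_1_l; apply (hval_A_nonneg A H Hnd Hed); auto|lra].
Qed.

Lemma pI_zero p a : inS H p a -> pI p a = 0.
Proof.
  intros HS. unfold pI. rewrite (sumR_ext H _ (fun _ => 0)); [apply sumR_const0|].
  intros h Hh. unfold ix. destruct (Req_EM_T (hval h p) 0) as [E|E]; [|ring].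
  rewrite hval_toR, (HS h Hh E). simpl. ring.
Qed.

Lemma pI_ge1 p a : In a A -> ~ inS H p a -> 1 <= pI p a.
Proof.
  intros Ha HS. unfold inS in HS.
  apply not_all_ex_not in HS. destruct HS as [h HS].
  apply imply_to_and in HS. destruct HS as [Hh HS].
  apply imply_to_and in HS. destruct HS as [E HS].
  unfold pI. eapply Rle_trans; [|apply (sumR_in_le H _ h)]; auto.
  - unfold ix. destruct (Req_EM_T (hval h p) 0); [|contradiction].
    rewrite Rmult_1_l, hval_toR. apply IZR_le.
    pose proof (hvalZ_A_nonneg A H Hnd Hed h a Hh Ha). lia.
  - intros h' Hh'. unfold ix.
    destruct (Req_EM_T (hval h' p) 0); [rewrite Rmult_1_l; apply (hval_A_nonneg A H Hnd Hed); auto|lra].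
Qed.

Definition g0 (a : lpt) : R := sumR H (fun h => Lc x y h * hval h (toR a)) + ln (Sx / Sy).

Definition coef K1 K2 h := Lc x y h + K1 * ix x h - K2 * ix y h.
Definition gpt K1 K2 (p : pt) := sumR H (fun h => coef K1 K2 h * hval h p) + ln (Sx / Sy).

Lemma gpt_toR K1 K2 a : gpt K1 K2 (toR a) = g0 a + K1 * pI x a - K2 * pI y a.
Proof.
  unfold gpt, g0, pI, coef.
  rewrite (sumR_ext H (fun h => (Lc x y h + K1 * ix x h - K2 * ix y h) * hval h (toR a))
     (fun h => Lc x y h * hval h (toR a) + (K1 * (ix x h * hval h (toR a)) - K2 * (ix y h * hval h (toR a)))))
     by (intros; ring).
  rewrite sumR_plus, sumR_minus, !sumR_scal. ring.
Qed.

Definition gl1 K1 K2 := sumR H (fun h => coef K1 K2 h * nx h).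
Definition gl2 K1 K2 := sumR H (fun h => coef K1 K2 h * ny h).
Definition gk K1 K2 := sumR H (fun h => coef K1 K2 h * cz h) + ln (Sx / Sy).

Lemma gpt_affine K1 K2 p : gpt K1 K2 p = gl1 K1 K2 * fst p + gl2 K1 K2 * snd p + gk K1 K2.
Proof.
  unfold gpt, gl1, gl2, gk. rewrite <- !sumR_scal_r.
  rewrite (sumR_ext H (fun h => coef K1 K2 h * hval h p)
     (fun h => coef K1 K2 h * nx h * fst p + coef K1 K2 h * ny h * snd p + coef K1 K2 h * cz h))
     by (intros; rewrite hval_eq; ring).
  rewrite !sumR_plus. ring.
Qed.

Lemma gpt_mono K1 K2 : 0 < K1 -> 0 < K2 -> gpt K1 K2 x < gpt K1 K2 y.
Proof.
  intros HK1 HK2.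
  assert (E : gpt K1 K2 y - gpt K1 K2 x = sumR H (fun h => coef K1 K2 h * (hval h y - hval h x))).
  { unfold gpt. rewrite (sumR_ext H (fun h => coef K1 K2 h * (hval h y - hval h x))
      (fun h => coef K1 K2 h * hval h y - coef K1 K2 h * hval h x)) by (intros; ring).
    rewrite sumR_minus. ring. }
  assert (T : forall h, In h H -> 0 <= coef K1 K2 h * (hval h y - hval h x) /\
            (coef K1 K2 h * (hval h y - hval h x) = 0 -> hval h x = hval h y)).
  { intros h Hh. pose proof (hx_nonneg A H Hed x h Hx Hh) as P1.
    pose proof (hx_nonneg A H Hed y h Hy Hh) as P2.
    unfold coef, Lc, ix.
    destruct (Req_EM_T (hval h x) 0) as [Ex|Ex];
    destruct (Req_EM_T (hval h y) 0) as [Ey|Ey];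
    destruct (Rlt_dec 0 (hval h x)); destruct (Rlt_dec 0 (hval h y)); try lra.
    - split; [nra|intros; lra].
    - split; [nra|intros Z; nra].
    - split; [nra|intros Z; nra].
    - replace (ln (hval h y / hval h x) + K1 * 0 - K2 * 0) with (ln (hval h y / hval h x)) by ring.
      apply ln_sign_prod; lra. }
  assert (0 < gpt K1 K2 y - gpt K1 K2 x); [|lra].
  rewrite E. destruct (Req_dec (sumR H (fun h => coef K1 K2 h * (hval h y - hval h x))) 0) as [Z|Z].
  - exfalso. apply Hxy. apply (hval_equal_pts A H Hnd Hed Hpoly).
    intros h Hh. apply (T h Hh). apply (sumR_zero_nonneg H _ (fun h Hh => proj1 (T h Hh)) Z h Hh).
  - assert (0 <= sumR H (fun h => coef K1 K2 h * (hval h y - hval h x)))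
      by (apply sumR_nonneg; intros; apply T; auto). lra.
Qed.

Lemma gl_nonzero K1 K2 : 0 < K1 -> 0 < K2 ->
  gl1 K1 K2 <> 0 \/ gl2 K1 K2 <> 0 \/ gk K1 K2 <> 0.
Proof.
  intros P1 P2. pose proof (gpt_mono K1 K2 P1 P2) as M. rewrite !gpt_affine in M.
  destruct (Req_dec (gl1 K1 K2) 0); [|auto]. destruct (Req_dec (gl2 K1 K2) 0); [|auto].
  exfalso. rewrite H0, H1 in M. lra.
Qed.

Lemma zz_both a : In a A -> inS H x a -> inS H y a ->
  0 < uu a /\ zz a = uu a * (exp (g0 a) - 1).
Proof.
  intros Ha Sxa Sya. pose proof Sx_pos; pose proof Sy_pos.
  assert (0 < uu a) by (unfold uu; apply Rdiv_lt_0_compat; auto;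
     apply Rmult_lt_0_compat; [apply Hw; auto|apply (beta_pos A H Hed); auto]).
  split; auto. unfold zz, vv, uu, g0.
  rewrite (beta_ratio A H Hnd Hed x y a Hx Hy Ha Sxa Sya).
  rewrite exp_plus, exp_ln by (apply Rdiv_lt_0_compat; auto). field. split; lra.
Qed.

Lemma zz_xonly a : In a A -> inS H x a -> ~ inS H y a -> zz a < 0.
Proof.
  intros Ha S1 S2. pose proof Sx_pos; pose proof Sy_pos. unfold zz, vv, uu.
  rewrite (beta_zero A H Hnd Hed y a Hy Ha S2).
  assert (0 < w a * beta H a x / Sx) by (apply Rdiv_lt_0_compat; auto;
     apply Rmult_lt_0_compat; [apply Hw; auto|apply (beta_pos A H Hed); auto]).
  unfold Rdiv in *. lra.
Qed.

Lemma zz_yonly a : In a A -> ~ inS H x a -> inS H y a -> 0 < zz a.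
Proof.
  intros Ha S1 S2. pose proof Sx_pos; pose proof Sy_pos. unfold zz, vv, uu.
  rewrite (beta_zero A H Hnd Hed x a Hx Ha S1).
  assert (0 < w a * beta H a y / Sy) by (apply Rdiv_lt_0_compat; auto;
     apply Rmult_lt_0_compat; [apply Hw; auto|apply (beta_pos A H Hed); auto]).
  unfold Rdiv in *. lra.
Qed.

Lemma zz_none a : In a A -> ~ inS H x a -> ~ inS H y a -> zz a = 0.
Proof.
  intros Ha S1 S2. unfold zz, vv, uu.
  rewrite (beta_zero A H Hnd Hed x a Hx Ha S1), (beta_zero A H Hnd Hed y a Hy Ha S2).
  unfold Rdiv; ring.
Qed.

Definition N0 := sumR A (fun a => Rabs (g0 a)) + 1.

Lemma N0_bound a : In a A -> Rabs (g0 a) < N0.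
Proof.
  intros Ha. unfold N0. pose proof (sumR_in_le A (fun a => Rabs (g0 a)) a (fun b _ => Rabs_pos _) Ha).
  lra.
Qed.

Lemma N0_pos : 0 < N0.
Proof. unfold N0. pose proof (sumR_nonneg A (fun a => Rabs (g0 a)) (fun b _ => Rabs_pos _)). lra. Qed.

Definition inSU a := inS H x a \/ inS H y a.

Lemma sign_ok K1 K2 a : N0 <= K1 -> N0 <= K2 -> In a A -> inSU a ->
  (zz a = 0 /\ gpt K1 K2 (toR a) = 0) \/ 0 < zz a / gpt K1 K2 (toR a).
Proof.
  intros HK1 HK2 Ha HS. rewrite gpt_toR. pose proof (N0_bound a Ha) as Nb.
  pose proof (Rle_abs (g0 a)) as Ab1. pose proof (Rle_abs (- g0 a)) as Ab2. rewrite Rabs_Ropp in Ab2.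
  destruct (classic (inS H x a)) as [S1|S1]; destruct (classic (inS H y a)) as [S2|S2].
  - rewrite (pI_zero x a S1), (pI_zero y a S2).
    destruct (zz_both a Ha S1 S2) as [Pu Ez]. rewrite Ez.
    destruct (Rtotal_order (g0 a) 0) as [L|[E|L]].
    + right. assert (exp (g0 a) < 1) by (rewrite <- exp_0; apply exp_increasing; auto).
      replace (uu a * (exp (g0 a) - 1) / (g0 a + K1 * 0 - K2 * 0)) with
        ((uu a * (1 - exp (g0 a))) / (- g0 a)) by (field; lra).
      apply Rdiv_lt_0_compat; [apply Rmult_lt_0_compat|]; lra.
    + left. rewrite E, exp_0. split; ring.
    + right. assert (1 < exp (g0 a)) by (rewrite <- exp_0; apply exp_increasing; auto).
      replace (g0 a + K1 * 0 - K2 * 0) with (g0 a) by ring.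
      apply Rdiv_lt_0_compat; [apply Rmult_lt_0_compat|]; lra.
  - rewrite (pI_zero x a S1). pose proof (pI_ge1 y a Ha S2).
    pose proof (zz_xonly a Ha S1 S2). right.
    assert (g0 a + K1 * 0 - K2 * pI y a < 0) by nra.
    replace (zz a / (g0 a + K1 * 0 - K2 * pI y a)) with ((- zz a) / (- (g0 a + K1 * 0 - K2 * pI y a)))
      by (field; lra).
    apply Rdiv_lt_0_compat; lra.
  - rewrite (pI_zero y a S2). pose proof (pI_ge1 x a Ha S1).
    pose proof (zz_yonly a Ha S1 S2). right.
    assert (0 < g0 a + K1 * pI x a - K2 * 0) by nra.
    apply Rdiv_lt_0_compat; lra.
  - destruct HS; contradiction.
Qed.

Lemma main_bad (e : lpt) : In e A ->
  forall a b c, In a A -> In b A -> In c A ->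
    (inSU a \/ (a = e /\ ~ inSU e)) -> (inSU b \/ (b = e /\ ~ inSU e)) ->
    (inSU c \/ (c = e /\ ~ inSU e)) ->
    orient (f a) (f b) (f c) * orient (toR a) (toR b) (toR c) = 0.
Proof.
  intros He.
  assert (HK : exists K1 K2, N0 <= K1 /\ N0 <= K2 /\ (~ inSU e -> gpt K1 K2 (toR e) = 0)).
  { destruct (classic (inSU e)) as [Se|Se].
    - exists N0, N0. repeat split; try lra. intros; contradiction.
    - assert (S1 : ~ inS H x e) by (intro; apply Se; left; auto).
      assert (S2 : ~ inS H y e) by (intro; apply Se; right; auto).
      pose proof (pI_ge1 x e He S1) as P. pose proof (pI_ge1 y e He S2) as Q.
      set (p := pI x e) in *. set (q := pI y e) in *.
      destruct (Rle_dec N0 ((N0 * q - g0 e) / p)) as [L|L].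
      + exists ((N0 * q - g0 e) / p), N0. repeat split; try lra.
        intros _. rewrite gpt_toR. fold p q. field. lra.
      + exists N0, ((g0 e + N0 * p) / q). repeat split; try lra.
        * apply Rnot_le_lt in L. apply (Rmult_le_reg_r q); [lra|].
          unfold Rdiv. rewrite Rmult_assoc, Rinv_l by lra.
          assert ((N0 * q - g0 e) / p * p < N0 * p) by (apply Rmult_lt_compat_r; lra).
          replace ((N0 * q - g0 e) / p * p) with (N0 * q - g0 e) in H0 by (field; lra). lra.
        * intros _. rewrite gpt_toR. fold p q. field. lra. }
  destruct HK as [K1 [K2 [HK1 [HK2 HKe]]]].
  pose proof N0_pos as N0p.
  set (D := fun a => if excluded_middle_informative (inSU a) then
                       (if Req_EM_T (gpt K1 K2 (toR a)) 0 then 1 else zz a / gpt K1 K2 (toR a))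
                     else if lpt_eq_dec a e then 1 else 0).
  assert (HD : forall a, In a A -> 0 <= D a /\ zz a = D a * gpt K1 K2 (toR a) /\
               ((inSU a \/ (a = e /\ ~ inSU e)) -> 0 < D a)).
  { intros a Ha. unfold D. destruct (excluded_middle_informative (inSU a)) as [S|S].
    - destruct (sign_ok K1 K2 a HK1 HK2 Ha S) as [[Z1 Z2]|P].
      + destruct (Req_EM_T (gpt K1 K2 (toR a)) 0); [|contradiction]. rewrite Z1, Z2. repeat split; lra.
      + destruct (Req_EM_T (gpt K1 K2 (toR a)) 0) as [E|E].
        * rewrite E in P. unfold Rdiv in P. rewrite Rinv_0, Rmult_0_r in P. lra.
        * repeat split; try lra. field. auto.
    - assert (Z : zz a = 0).
      { apply zz_none; auto; intro; apply S; [left|right]; auto. }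
      destruct (lpt_eq_dec a e) as [E|E].
      + subst a. repeat split; try lra. rewrite Z. rewrite HKe; auto. ring.
      + repeat split; try lra. intros [S'|[S' _]]; contradiction. }
  intros a b c Ha Hb Hc Ca Cb Cc.
  apply (AL A f D (gl1 K1 K2) (gl2 K1 K2) (gk K1 K2) Hwc).
  - intros; apply HD; auto.
  - apply gl_nonzero; lra.
  - rewrite <- zz_sum. apply sumR_ext. intros t Ht. destruct (HD t Ht) as [_ [E _]].
    rewrite E. rewrite gpt_affine. unfold toR; simpl. ring.
  - rewrite <- zz_f1. apply sumR_ext. intros t Ht. destruct (HD t Ht) as [_ [E _]].
    rewrite E. rewrite gpt_affine. unfold toR; simpl. ring.
  - rewrite <- zz_f2. apply sumR_ext. intros t Ht. destruct (HD t Ht) as [_ [E _]].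
    rewrite E. rewrite gpt_affine. unfold toR; simpl. ring.
  - auto. - auto. - auto.
  - apply HD; auto. - apply HD; auto. - apply HD; auto.
Qed.

End Inj.

Lemma orient_vec1 p q r c : orient p q r * (fst c - fst p) =
  orient p c r * (fst q - fst p) + orient p q c * (fst r - fst p).
Proof. unfold orient; ring. Qed.
Lemma orient_vec2 p q r c : orient p q r * (snd c - snd p) =
  orient p c r * (snd q - snd p) + orient p q c * (snd r - snd p).
Proof. unfold orient; ring. Qed.

Lemma pt_neq (p q : pt) : p <> q -> fst p - fst q <> 0 \/ snd p - snd q <> 0.
Proof.
  intros N. destruct p as [p1 p2], q as [q1 q2]; simpl.
  destruct (Req_dec p1 q1); destruct (Req_dec p2 q2); try (left; lra); try (right; lra).
  exfalso; apply N; subst; auto.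
Qed.

Lemma orient_repeat1 p q : orient p p q = 0. Proof. unfold orient; ring. Qed.
Lemma orient_repeat2 p q : orient p q p = 0. Proof. unfold orient; ring. Qed.
Lemma orient_repeat3 p q : orient q p p = 0. Proof. unfold orient; ring. Qed.
Lemma orient_cyc p q r : orient q r p = orient p q r. Proof. unfold orient; ring. Qed.

Lemma scal_vec_zero (k : R) (p q : pt) : p <> q ->
  k * (fst p - fst q) = 0 -> k * (snd p - snd q) = 0 -> k = 0.
Proof.
  intros N E1 E2. destruct (pt_neq p q N) as [D|D].
  - apply Rmult_integral in E1; destruct E1; [auto|contradiction].
  - apply Rmult_integral in E2; destruct E2; [auto|contradiction].
Qed.

Lemma line_nondeg p q r c : orient p q r <> 0 -> orient p q c = 0 -> c <> p ->
  orient p c r <> 0.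
Proof.
  intros H1 H2 H3 E.
  pose proof (orient_vec1 p q r c) as V1. pose proof (orient_vec2 p q r c) as V2.
  rewrite E, H2 in V1, V2.
  assert (orient p q r = 0); [|contradiction].
  apply (scal_vec_zero _ c p H3); lra.
Qed.

Lemma line_trans p q r c : orient p q r = 0 -> orient p c r = 0 -> r <> p -> orient p q c = 0.
Proof.
  intros H1 H2 H3.
  pose proof (orient_vec1 p q r c) as V1. pose proof (orient_vec2 p q r c) as V2.
  rewrite H1, H2 in V1, V2.
  apply (scal_vec_zero _ r p H3); lra.
Qed.

Lemma collinear3 p q a b c : p <> q -> orient p q a = 0 -> orient p q b = 0 -> orient p q c = 0 ->
  orient a b c = 0.
Proof.
  intros N Ha Hb Hc.
  assert (I1 : orient a b c * (fst q - fst p) =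
    (orient p q c - orient p q a) * (fst b - fst a) - (orient p q b - orient p q a) * (fst c - fst a))
    by (unfold orient; ring).
  assert (I2 : orient a b c * (snd q - snd p) =
    (orient p q c - orient p q a) * (snd b - snd a) - (orient p q b - orient p q a) * (snd c - snd a))
    by (unfold orient; ring).
  rewrite Ha, Hb, Hc in I1, I2.
  apply (scal_vec_zero _ q p); [auto|lra|lra].
Qed.

Lemma hval_line h p q c : hval h p = 0 -> hval h q = 0 -> orient p q c = 0 -> p <> q ->
  hval h c = 0.
Proof.
  intros Hp Hq O N.
  assert (I1 : hval h c * (fst q - fst p) = (fst c - fst p) * (hval h q - hval h p)
     + ny h * orient p q c + (fst q - fst p) * hval h p)
    by (rewrite !hval_eq; unfold orient; ring).
  assert (I2 : hval h c * (snd q - snd p) = (snd c - snd p) * (hval h q - hval h p)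
     - nx h * orient p q c + (snd q - snd p) * hval h p)
    by (rewrite !hval_eq; unfold orient; ring).
  rewrite Hp, Hq, O in I1, I2.
  apply (scal_vec_zero _ q p); [auto|lra|lra].
Qed.

Lemma argmin_ex {T} (l : list T) (Pr : T -> Prop) (phi : T -> R) :
  (exists a, In a l /\ Pr a) ->
  exists m, In m l /\ Pr m /\ forall b, In b l -> Pr b -> phi m <= phi b.
Proof.
  induction l as [|x l IH]; intros [a [Ha Pa]]; [destruct Ha|].
  destruct (classic (exists a, In a l /\ Pr a)) as [Ex|Nex].
  - destruct (IH Ex) as [m [Hm [Pm Hmin]]].
    destruct (classic (Pr x /\ phi x <= phi m)) as [[Px Le]|N].
    + exists x. split; [simpl; auto|]. split; auto.
      intros b [E|Hb] Pb; [subst; lra|]. specialize (Hmin b Hb Pb). lra.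
    + exists m. split; [simpl; auto|]. split; auto.
      intros b [E|Hb] Pb; auto. subst b.
      destruct (Rle_dec (phi x) (phi m)); [exfalso; apply N; auto|lra].
  - destruct Ha as [E|Ha]; [subst a|exfalso; apply Nex; eauto].
    exists x. split; [simpl; auto|]. split; auto.
    intros b [E|Hb] Pb; [subst; lra|]. exfalso; apply Nex; eauto.
Qed.

Section Final1.
Variable A : list lpt.
Variable H : list aform.
Variable f : lpt -> pt.
Hypothesis Hnd : NoDup A.
Hypothesis Hed : edge_data A H.
Hypothesis Hpoly : is_polygon A.

Lemma normal_nonzero h : In h H -> nx h <> 0 \/ ny h <> 0.
Proof.
  intros Hh. destruct Hed as [_ [G _]]. specialize (G h Hh).
  destruct h as [[a b] c]. simpl in *.
  destruct (Z.eq_dec a 0) as [Ea|Ea]; [|left; apply not_0_IZR; auto].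
  destruct (Z.eq_dec b 0) as [Eb|Eb]; [|right; apply not_0_IZR; auto].
  subst. simpl in G. discriminate.
Qed.

Definition tc (h : aform) (p : pt) := nx h * snd p - ny h * fst p.

Lemma line_eq h p q : In h H -> hval h p = 0 -> hval h q = 0 -> tc h p = tc h q -> p = q.
Proof.
  intros Hh Hp Hq Ht. unfold tc in Ht. rewrite hval_eq in Hp, Hq.
  assert (Np : 0 < nx h * nx h + ny h * ny h).
  { destruct (normal_nonzero h Hh) as [N|N].
    - assert (0 < nx h * nx h) by (apply Rsqr_pos_lt; auto). nra.
    - assert (0 < ny h * ny h) by (apply Rsqr_pos_lt; auto). nra. }
  destruct p as [p1 p2], q as [q1 q2]; simpl in *.
  assert (E1 : (nx h * nx h + ny h * ny h) * (p1 - q1) =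
     nx h * ((nx h * p1 + ny h * p2 + cz h) - (nx h * q1 + ny h * q2 + cz h))
     - ny h * ((nx h * p2 - ny h * p1) - (nx h * q2 - ny h * q1))) by ring.
  assert (E2 : (nx h * nx h + ny h * ny h) * (p2 - q2) =
     ny h * ((nx h * p1 + ny h * p2 + cz h) - (nx h * q1 + ny h * q2 + cz h))
     + nx h * ((nx h * p2 - ny h * p1) - (nx h * q2 - ny h * q1))) by ring.
  rewrite Hp, Hq, Ht in E1, E2.
  replace (nx h * (0 - 0) - ny h * (nx h * q2 - ny h * q1 - (nx h * q2 - ny h * q1))) with 0 in E1 by ring.
  replace (ny h * (0 - 0) + nx h * (nx h * q2 - ny h * q1 - (nx h * q2 - ny h * q1))) with 0 in E2 by ring.
  apply Rmult_integral in E1; apply Rmult_integral in E2.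
  destruct E1 as [E1|E1]; [lra|]; destruct E2 as [E2|E2]; [lra|].
  f_equal; lra.
Qed.

Lemma extreme_vertex (q : pt) h (sg : R) (P : lpt) :
  In h H -> hval h q = 0 -> sg <> 0 -> In P A -> inS H q P ->
  (forall b, In b A -> inS H q b -> sg * tc h (toR P) <= sg * tc h (toR b)) ->
  is_vertex A P.
Proof.
  intros Hh Hq Hsg HP SP Hmin. split; auto.
  intros [lam [Hl [E1 [E2 E3]]]].
  assert (Hincl : incl (remove lpt_eq_dec P A) A)
    by (intros b Hb; apply (in_remove _ _ _ _ Hb)).
  assert (Hpos : forall b, In (b) (remove lpt_eq_dec P A) -> 0 < lam b ->
             sg * tc h (toR P) < sg * tc h (toR b)).
  { intros b Hb Lb.
    destruct (in_remove _ _ _ _ Hb) as [HbA Hne].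
    pose proof (support_inS A H Hnd Hed _ lam (toR P) b Hincl Hl E1 E2 E3 Hb Lb) as Sb.
    assert (Sqb : inS H q b).
    { intros h' Hh' E. apply Sb; auto. rewrite hval_toR, (SP h' Hh' E). reflexivity. }
    specialize (Hmin b HbA Sqb).
    destruct (Req_dec (sg * tc h (toR P)) (sg * tc h (toR b))) as [E|E]; [|lra].
    exfalso. apply Hne. apply toR_inj. apply (line_eq h); auto.
    - rewrite hval_toR, (Sqb h Hh Hq). reflexivity.
    - rewrite hval_toR, (SP h Hh Hq). reflexivity.
    - apply (Rmult_eq_reg_l sg); auto. }
  assert (Lin : sg * tc h (toR P) = sumR (remove lpt_eq_dec P A) (fun b => lam b * (sg * tc h (toR b)))).
  { unfold tc at 1. rewrite E2, E3.
    rewrite (sumR_ext _ (fun b => lam b * (sg * tc h (toR b)))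
       (fun b => sg * nx h * (lam b * IZR (snd b)) - sg * ny h * (lam b * IZR (fst b)))).
    - rewrite sumR_minus, !sumR_scal. ring.
    - intros b _. unfold tc, toR; simpl. ring. }
  assert (Z : sumR (remove lpt_eq_dec P A) (fun b => lam b * (sg * tc h (toR b) - sg * tc h (toR P))) = 0).
  { rewrite (sumR_ext _ _ (fun b => lam b * (sg * tc h (toR b)) - (sg * tc h (toR P)) * lam b))
      by (intros; ring).
    rewrite sumR_minus, sumR_scal, E1, <- Lin. ring. }
  assert (Hnn : forall b, In b (remove lpt_eq_dec P A) -> 0 <= lam b * (sg * tc h (toR b) - sg * tc h (toR P))).
  { intros b Hb. destruct (Req_dec (lam b) 0) as [L|L]; [rewrite L; lra|].
    assert (0 < lam b) by (pose proof (Hl b Hb); lra).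
    specialize (Hpos b Hb H0). nra. }
  assert (Hz : forall b, In b (remove lpt_eq_dec P A) -> lam b = 0).
  { intros b Hb. pose proof (sumR_zero_nonneg _ _ Hnn Z b Hb) as Zb.
    destruct (Req_dec (lam b) 0) as [L|L]; auto.
    assert (0 < lam b) by (pose proof (Hl b Hb); lra).
    specialize (Hpos b Hb H0). exfalso.
    apply Rmult_integral in Zb. destruct Zb; lra. }
  rewrite (sumR_ext _ lam (fun _ => 0) Hz), sumR_const0 in E1. lra.
Qed.

Lemma singleton_point (w : lpt -> R) (x : pt) (v : lpt) :
  pos_weights A w -> in_hull A x -> In v A -> inS H x v ->
  (forall b, In b A -> inS H x b -> b = v) ->
  x = toR v /\ is_vertex A v /\ patch A H w f x = f v.
Proof.
  intros Hw Hx Hv Sv Huniq.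
  assert (Xe : x = toR v).
  { destruct Hx as [lam [Hl [E1 [E2 E3]]]].
    assert (Hz : forall b, In b A -> b <> v -> lam b = 0).
    { intros b Hb Hne. destruct (Req_dec (lam b) 0) as [L|L]; auto.
      exfalso. apply Hne. apply Huniq; auto.
      apply (support_inS A H Hnd Hed A lam x b); auto. intros z; auto.
      pose proof (Hl b Hb). lra. }
    rewrite (sumR_single A lam v Hnd Hv Hz) in E1.
    rewrite (sumR_single A _ v Hnd Hv) in E2 by (intros b Hb Hne; rewrite (Hz b Hb Hne); ring).
    rewrite (sumR_single A _ v Hnd Hv) in E3 by (intros b Hb Hne; rewrite (Hz b Hb Hne); ring).
    destruct x as [x1 x2]; unfold toR; simpl in *. rewrite E1 in E2, E3. f_equal; lra. }
  split; auto. split.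
  - split; auto. intros [lam [Hl [E1 [E2 E3]]]].
    assert (Hincl : incl (remove lpt_eq_dec v A) A)
      by (intros b Hb; apply (in_remove _ _ _ _ Hb)).
    destruct (classic (exists b, In b (remove lpt_eq_dec v A) /\ 0 < lam b)) as [[b [Hb Lb]]|N].
    + pose proof (support_inS A H Hnd Hed _ lam (toR v) b Hincl Hl E1 E2 E3 Hb Lb) as Sb.
      destruct (in_remove _ _ _ _ Hb) as [HbA Hne]. apply Hne. apply Huniq; auto.
      rewrite Xe; auto.
    + assert (sumR (remove lpt_eq_dec v A) lam = 0).
      { rewrite (sumR_ext _ lam (fun _ => 0)); [apply sumR_const0|].
        intros b Hb. pose proof (Hl b Hb). destruct (Req_dec (lam b) 0); auto.
        exfalso; apply N; exists b; split; auto; lra. }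
      lra.
  - assert (Hb0 : forall b, In b A -> b <> v -> beta H b x = 0).
    { intros b Hb Hne. apply (beta_zero A H Hnd Hed x b Hx Hb). intro S; apply Hne; apply Huniq; auto. }
    assert (Pv : 0 < beta H v x) by (apply (beta_pos A H Hed); auto).
    assert (Wv : 0 < w v) by (apply Hw; auto).
    unfold patch.
    rewrite (sumR_single A (fun a => w a * beta H a x) v Hnd Hv)
      by (intros b Hb Hne; rewrite (Hb0 b Hb Hne); ring).
    rewrite (sumR_single A (fun a => w a * fst (f a) * beta H a x) v Hnd Hv)
      by (intros b Hb Hne; rewrite (Hb0 b Hb Hne); ring).
    rewrite (sumR_single A (fun a => w a * snd (f a) * beta H a x) v Hnd Hv)
      by (intros b Hb Hne; rewrite (Hb0 b Hb Hne); ring).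
    destruct (f v) as [f1 f2]; simpl. f_equal; field; split; lra.
Qed.

Definition bad (a b c : lpt) := orient (f a) (f b) (f c) * orient (toR a) (toR b) (toR c) = 0.

Lemma collinear_img (P Q c r : lpt) : f P <> f Q ->
  orient (toR P) (toR Q) (toR r) <> 0 ->
  bad P Q c -> bad P Q r -> bad P c r -> bad Q c r ->
  orient (f P) (f Q) (f c) = 0.
Proof.
  intros NF Or Bc Br Bcr Bqcr. unfold bad in *.
  assert (Fr : orient (f P) (f Q) (f r) = 0).
  { apply Rmult_integral in Br; destruct Br; auto; contradiction. }
  destruct (Req_dec (orient (toR P) (toR Q) (toR c)) 0) as [Oc|Oc].
  2:{ apply Rmult_integral in Bc; destruct Bc; auto; contradiction. }
  destruct (lpt_eq_dec c P) as [E|NP].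
  { subst. unfold orient; ring. }
  destruct (lpt_eq_dec c Q) as [E|NQ].
  { subst. unfold orient; ring. }
  assert (O1 : orient (toR P) (toR c) (toR r) <> 0).
  { apply line_nondeg with (toR Q); auto. intro E; apply NP; apply toR_inj; auto. }
  assert (O2 : orient (toR Q) (toR c) (toR r) <> 0).
  { apply line_nondeg with (toR P); auto.
    - rewrite orient_swap. intro E; apply Or; lra.
    - rewrite orient_swap, Oc; ring.
    - intro E; apply NQ; apply toR_inj; auto. }
  assert (F1 : orient (f P) (f c) (f r) = 0)
    by (apply Rmult_integral in Bcr; destruct Bcr; auto; contradiction).
  assert (F2 : orient (f Q) (f c) (f r) = 0)
    by (apply Rmult_integral in Bqcr; destruct Bqcr; auto; contradiction).
  destruct (classic (f r = f P)) as [E|E].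
  - assert (orient (f Q) (f P) (f c) = 0).
    { apply line_trans with (f r); auto.
      - rewrite orient_swap, Fr; ring.
      - rewrite E; auto. }
    rewrite orient_swap in H0. lra.
  - apply line_trans with (f r); auto.
Qed.

Hypothesis Hcomp : compatible A f.

Lemma core (q : pt) (SU : lpt -> Prop) :
  in_hull A q -> (forall a, inS H q a -> SU a) ->
  (forall a b c, In a A -> In b A -> In c A -> SU a -> SU b -> SU c -> bad a b c) ->
  (forall e, In e A -> ~ SU e -> forall a b c, In a A -> In b A -> In c A ->
     (SU a \/ a = e) -> (SU b \/ b = e) -> (SU c \/ c = e) -> bad a b c) ->
  (exists P0 Q0, In P0 A /\ In Q0 A /\ P0 <> Q0 /\ inS H q P0 /\ inS H q Q0) ->
  False.
Proof.
  intros Hq HSU C1 C2 [P0 [Q0 [HP0 [HQ0 [NPQ0 [SP0 SQ0]]]]]].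
  destruct Hcomp as [Hwc Hvert].
  destruct Hwc as [t0 [t1 [t2 [T0 [T1 [T2 [OA [Of _]]]]]]]].
  destruct (classic (exists h, In h H /\ hval h q = 0)) as [[h [Hh Hhq]]|Nh].
  2:{ assert (All : forall a, SU a).
      { intros a. apply HSU. intros h Hh E. exfalso; apply Nh; exists h; auto. }
      specialize (C1 t0 t1 t2 T0 T1 T2 (All _) (All _) (All _)). unfold bad in C1.
      apply Rmult_integral in C1. destruct C1; contradiction. }
  destruct (argmin_ex A (inS H q) (fun b => tc h (toR b))) as [P [HP [SP Pmin]]].
  { exists P0; auto. }
  destruct (argmin_ex A (inS H q) (fun b => -1 * tc h (toR b))) as [Q [HQ [SQ Qmin]]].
  { exists P0; auto. }
  assert (onl : forall b, In b A -> inS H q b -> hval h (toR b) = 0).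
  { intros b Hb Sb. rewrite hval_toR, (Sb h Hh Hhq). reflexivity. }
  assert (NPQ : P <> Q).
  { intro E. subst Q. apply NPQ0. apply toR_inj. apply (line_eq h); auto.
    pose proof (Pmin P0 HP0 SP0). pose proof (Pmin Q0 HQ0 SQ0).
    pose proof (Qmin P0 HP0 SP0). pose proof (Qmin Q0 HQ0 SQ0). simpl in *. lra. }
  assert (VP : is_vertex A P).
  { apply (extreme_vertex q h 1 P Hh Hhq); auto; try lra. intros b Hb Sb. specialize (Pmin b Hb Sb). lra. }
  assert (VQ : is_vertex A Q).
  { apply (extreme_vertex q h (-1) Q Hh Hhq); auto; lra. }
  assert (NF : f P <> f Q) by (apply Hvert; auto).
  assert (NPQr : toR P <> toR Q) by (intro E; apply NPQ; apply toR_inj; auto).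
  assert (SUP : SU P) by auto. assert (SUQ : SU Q) by auto.
  assert (OnL : forall c, In c A -> orient (f P) (f Q) (f c) = 0).
  { destruct (classic (exists r, In r A /\ SU r /\ orient (toR P) (toR Q) (toR r) <> 0))
      as [[r [Hr [Sr Or]]]|Nr].
    - intros c Hc.
      destruct (classic (SU c)) as [Sc|Sc].
      + apply collinear_img with r; auto; apply C1; auto.
      + apply collinear_img with r; auto; apply (C2 c Hc Sc); auto.
    - assert (Hr0 : exists r0, In r0 A /\ orient (toR P) (toR Q) (toR r0) <> 0).
      { apply NNPP; intro N. apply OA. apply (collinear3 (toR P) (toR Q)); auto;
        apply NNPP; intro N'; apply N; eauto. }
      destruct Hr0 as [r0 [Hr0 Or0]].
      assert (Sr0 : ~ SU r0) by (intro S; apply Nr; eauto).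
      intros c Hc.
      destruct (classic (SU c)) as [Sc|Sc].
      + apply collinear_img with r0; auto; apply (C2 r0 Hr0 Sr0); auto.
      + assert (Oc : orient (toR P) (toR Q) (toR c) <> 0).
        { intro Oc. apply Sc. apply HSU. intros h' Hh' E.
          apply eq_IZR. rewrite <- hval_toR.
          apply (hval_line h' (toR P) (toR Q)); auto.
          - rewrite hval_toR, (SP h' Hh' E); reflexivity.
          - rewrite hval_toR, (SQ h' Hh' E); reflexivity. }
        pose proof (C2 c Hc Sc P Q c HP HQ Hc (or_introl SUP) (or_introl SUQ) (or_intror eq_refl)) as B.
        unfold bad in B. apply Rmult_integral in B. destruct B; auto; contradiction. }
  apply Of. apply (collinear3 (f P) (f Q)); auto.
Qed.

End Final1.

Lemma dir1 (A : list lpt) (H : list aform) (f : lpt -> pt) :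
  NoDup A -> is_polygon A -> edge_data A H -> compatible A f ->
  forall w, pos_weights A w -> injective_on_hull A (patch A H w f).
Proof.
  intros Hnd Hpoly Hed Hcomp w Hw x y Hx Hy Hp. apply NNPP; intro Hxy.
  pose proof Hcomp as [Hwc Hvert].
  pose proof (main_bad A H f w x y Hnd Hed Hpoly Hwc Hw Hx Hy Hp Hxy) as MB.
  assert (C1 : forall a b c, In a A -> In b A -> In c A -> inSU H x y a -> inSU H x y b ->
                 inSU H x y c -> bad f a b c).
  { intros a b c Ha Hb Hc Sa Sb Sc. unfold bad. apply (MB a Ha a b c); auto. }
  assert (C2 : forall e, In e A -> ~ inSU H x y e -> forall a b c, In a A -> In b A -> In c A ->
     (inSU H x y a \/ a = e) -> (inSU H x y b \/ b = e) -> (inSU H x y c \/ c = e) -> bad f a b c).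
  { intros e He Se a b c Ha Hb Hc Sa Sb Sc. unfold bad. apply (MB e He a b c); auto;
    [destruct Sa|destruct Sb|destruct Sc]; auto. }
  destruct (classic (exists P0 Q0, In P0 A /\ In Q0 A /\ P0 <> Q0 /\ inS H y P0 /\ inS H y Q0)) as [Ty|Ty].
  { apply (core A H f Hnd Hed Hcomp y (inSU H x y)); auto. intros a S; right; auto. }
  destruct (classic (exists P0 Q0, In P0 A /\ In Q0 A /\ P0 <> Q0 /\ inS H x P0 /\ inS H x Q0)) as [Tx|Tx].
  { apply (core A H f Hnd Hed Hcomp x (inSU H x y)); auto. intros a S; left; auto. }
  destruct (inS_exists A H Hnd Hed x Hx) as [vx [Hvx Svx]].
  destruct (inS_exists A H Hnd Hed y Hy) as [vy [Hvy Svy]].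
  assert (Ux : forall b, In b A -> inS H x b -> b = vx).
  { intros b Hb Sb. apply NNPP; intro N. apply Tx. exists b, vx. auto. }
  assert (Uy : forall b, In b A -> inS H y b -> b = vy).
  { intros b Hb Sb. apply NNPP; intro N. apply Ty. exists b, vy. auto. }
  destruct (singleton_point A H f Hnd Hed w x vx Hw Hx Hvx Svx Ux) as [Ex [Vx Px]].
  destruct (singleton_point A H f Hnd Hed w y vy Hw Hy Hvy Svy Uy) as [Ey [Vy Py]].
  assert (vx <> vy) by (intro E; apply Hxy; rewrite Ex, Ey, E; auto).
  apply (Hvert vx vy Vx Vy H0). rewrite <- Px, <- Py. auto.
Qed.

Lemma sum_remove (l : list lpt) (g : lpt -> R) (v : lpt) :
  NoDup l -> In v l -> sumR l g = g v + sumR (remove lpt_eq_dec v l) g.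
Proof.
  induction l as [|x l IH]; intros Hnd Hv; [destruct Hv|].
  inversion Hnd; subst. simpl.
  destruct (lpt_eq_dec v x) as [E|E].
  - subst. rewrite notin_remove; auto.
  - simpl. destruct Hv as [Hv|Hv]; [congruence|]. rewrite (IH H2 Hv). ring.
Qed.

Section Vert.
Variable A : list lpt.
Variable H : list aform.
Variable f : lpt -> pt.
Hypothesis Hnd : NoDup A.
Hypothesis Hed : edge_data A H.

Lemma inS_self v : inS H (toR v) v.
Proof. intros h Hh E. rewrite hval_toR in E. apply eq_IZR in E. auto. Qed.

Lemma vertex_unique v : is_vertex A v -> forall b, In b A -> inS H (toR v) b -> b = v.
Proof.
  intros [Hv Hnot] b Hb Sb. apply NNPP; intro Hne. apply Hnot.
  set (eps := 1 / (1 + sumR H (fun h => Rabs (hval h (toR v) - hval h (toR b))))).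
  assert (Ssum : 0 <= sumR H (fun h => Rabs (hval h (toR v) - hval h (toR b))))
    by (apply sumR_nonneg; intros; apply Rabs_pos).
  assert (Eps : 0 < eps) by (unfold eps; apply Rdiv_lt_0_compat; lra).
  assert (EpsB : forall h, In h H -> eps * Rabs (hval h (toR v) - hval h (toR b)) <= 1).
  { intros h Hh. unfold eps.
    pose proof (sumR_in_le H (fun h => Rabs (hval h (toR v) - hval h (toR b))) h
      (fun _ _ => Rabs_pos _) Hh). simpl in H0.
    unfold Rdiv. rewrite Rmult_1_l.
    apply (Rmult_le_reg_l (1 + sumR H (fun h => Rabs (hval h (toR v) - hval h (toR b))))); [lra|].
    rewrite <- Rmult_assoc, Rinv_r by lra. lra. }
  set (p := (fst (toR v) + eps * (fst (toR v) - fst (toR b)), snd (toR v) + eps * (snd (toR v) - snd (toR b)))).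
  assert (Hp : in_hull A p).
  { apply (ed_hull A H Hed). intros h Hh.
    assert (E : hval h p = hval h (toR v) + eps * (hval h (toR v) - hval h (toR b)))
      by (unfold p; rewrite !hval_eq; simpl; ring).
    rewrite E.
    destruct (Req_dec (hval h (toR v)) 0) as [Z|Z].
    - rewrite Z. rewrite hval_toR, (Sb h Hh Z). simpl. lra.
    - assert (G1 : 1 <= hval h (toR v)).
      { rewrite hval_toR. apply IZR_le. pose proof (hvalZ_A_nonneg A H Hnd Hed h v Hh Hv).
        rewrite hval_toR in Z. assert (hvalZ h v <> 0%Z) by (intro E'; apply Z; rewrite E'; auto). lia. }
      specialize (EpsB h Hh).
      pose proof (Rle_abs (- (hval h (toR v) - hval h (toR b)))) as Ab. rewrite Rabs_Ropp in Ab.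
      assert (eps * (- (hval h (toR v) - hval h (toR b))) <= eps * Rabs (hval h (toR v) - hval h (toR b)))
        by (apply Rmult_le_compat_l; lra).
      lra. }
  destruct Hp as [mu [Hm [Em1 [Em2 Em3]]]].
  assert (Hmv : mu v <= 1) by (rewrite <- Em1; apply (sumR_in_le A mu v); auto).
  set (den := 1 + eps - mu v).
  assert (Den : 0 < den) by (unfold den; lra).
  set (ib := fun a => if lpt_eq_dec a b then 1 else 0).
  assert (Hbr : In b (remove lpt_eq_dec v A)) by (apply in_in_remove; auto).
  assert (Sib : sumR (remove lpt_eq_dec v A) (fun a => ib a * 1) = 1 /\
            sumR (remove lpt_eq_dec v A) (fun a => ib a * IZR (fst a)) = IZR (fst b) /\
            sumR (remove lpt_eq_dec v A) (fun a => ib a * IZR (snd a)) = IZR (snd b)).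
  { assert (K : forall g, sumR (remove lpt_eq_dec v A) (fun a => ib a * g a) = g b).
    { intros g. pose proof (sum_remove A (fun a => ib a * g a) v Hnd Hv) as SR.
      rewrite (sumR_single A (fun a => ib a * g a) b Hnd Hb) in SR.
      - unfold ib in *. destruct (lpt_eq_dec v b); [congruence|].
        destruct (lpt_eq_dec b b); [|congruence]. lra.
      - intros a _ Ha. unfold ib. destruct (lpt_eq_dec a b); [congruence|ring]. }
    repeat split; apply K. }
  destruct Sib as [Sib1 [Sib2 Sib3]].
  pose proof (sum_remove A mu v Hnd Hv) as R1.
  pose proof (sum_remove A (fun a => mu a * IZR (fst a)) v Hnd Hv) as R2.
  pose proof (sum_remove A (fun a => mu a * IZR (snd a)) v Hnd Hv) as R3.
  exists (fun a => (mu a + eps * ib a) / den).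
  split; [|split; [|split]].
  - intros a Ha. destruct (in_remove _ _ _ _ Ha) as [HaA _].
    unfold Rdiv. apply Rmult_le_pos; [|left; apply Rinv_0_lt_compat; auto]. pose proof (Hm a HaA). unfold ib. destruct (lpt_eq_dec a b); nra.
  - rewrite (sumR_ext _ _ (fun a => / den * mu a + (eps / den) * (ib a * 1))) by (intros; unfold Rdiv; ring).
    rewrite sumR_plus, !sumR_scal, Sib1. rewrite Em1 in R1.
    replace (sumR (remove lpt_eq_dec v A) mu) with (1 - mu v) by lra.
    unfold den. field. lra.
  - rewrite (sumR_ext _ _ (fun a => / den * (mu a * IZR (fst a)) + (eps / den) * (ib a * IZR (fst a))))
      by (intros; unfold Rdiv; ring).
    rewrite sumR_plus, !sumR_scal, Sib2.
    replace (sumR (remove lpt_eq_dec v A) (fun a => mu a * IZR (fst a)))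
      with (fst p - mu v * IZR (fst v)) by lra.
    unfold p, den, toR; simpl. field. lra.
  - rewrite (sumR_ext _ _ (fun a => / den * (mu a * IZR (snd a)) + (eps / den) * (ib a * IZR (snd a))))
      by (intros; unfold Rdiv; ring).
    rewrite sumR_plus, !sumR_scal, Sib3.
    replace (sumR (remove lpt_eq_dec v A) (fun a => mu a * IZR (snd a)))
      with (snd p - mu v * IZR (snd v)) by lra.
    unfold p, den, toR; simpl. field. lra.
Qed.

Lemma dir2_vert :
  (forall w, pos_weights A w -> injective_on_hull A (patch A H w f)) ->
  forall v1 v2, is_vertex A v1 -> is_vertex A v2 -> v1 <> v2 -> f v1 <> f v2.
Proof.
  intros Hinj v1 v2 V1 V2 Ne E.
  assert (Hw : pos_weights A (fun _ => 1)) by (intros a _; lra).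
  destruct V1 as [Hv1 N1]. destruct V2 as [Hv2 N2].
  destruct (singleton_point A H f Hnd Hed (fun _ => 1) (toR v1) v1 Hw (in_hull_pt A Hnd v1 Hv1) Hv1
      (inS_self v1) (vertex_unique v1 (conj Hv1 N1))) as [_ [_ P1]].
  destruct (singleton_point A H f Hnd Hed (fun _ => 1) (toR v2) v2 Hw (in_hull_pt A Hnd v2 Hv2) Hv2
      (inS_self v2) (vertex_unique v2 (conj Hv2 N2))) as [_ [_ P2]].
  apply Ne. apply toR_inj. apply (Hinj _ Hw); try apply in_hull_pt; auto.
  rewrite P1, P2. auto.
Qed.

End Vert.

Definition PP (f : lpt -> pt) (i : nat) (a : lpt) : R :=
  match i with 1%nat => fst (f a) | 2%nat => snd (f a) | _ => 1 end.
Definition QQ (i : nat) (a : lpt) : R :=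
  match i with 1%nat => IZR (fst a) | 2%nat => IZR (snd a) | _ => 1 end.

Lemma continuity_pt_ext (F G : R -> R) x : (forall y, F y = G y) -> continuity_pt F x -> continuity_pt G x.
Proof. intros E C. apply continuity_pt_locally_ext with (f:=F) (a:=1); auto; lra. Qed.

Lemma S3_ext_in {T} (l : list T) F G :
  (forall a b c, In a l -> In b l -> In c l -> F a b c = G a b c) -> S3 l F = S3 l G.
Proof.
  intros E; unfold S3. apply sumR_ext; intros; apply sumR_ext; intros; apply sumR_ext; intros; auto.
Qed.

Section W1.
Variable A : list lpt.
Variable f : lpt -> pt.
Hypothesis Hnd : NoDup A.

Definition MD (D : lpt -> R) i j := sumR A (fun a => D a * PP f i a * QQ j a).
Definition detD D := det3 (MD D 1 1) (MD D 1 2) (MD D 1 3) (MD D 2 1) (MD D 2 2) (MD D 2 3)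
  (MD D 3 1) (MD D 3 2) (MD D 3 3).

Lemma detD_CB D : 6 * detD D =
  S3 A (fun a b c => D a * D b * D c * (orient (f a) (f b) (f c) * orient (toR a) (toR b) (toR c))).
Proof.
  pose proof (cauchy_binet A (fun a => D a * fst (f a)) (fun a => D a * snd (f a)) (fun a => D a)
     (fun a => IZR (fst a)) (fun a => IZR (snd a)) (fun _ => 1)) as CB.
  assert (E : forall i j, (i = 1 \/ i = 2 \/ i = 3)%nat -> (j = 1 \/ j = 2 \/ j = 3)%nat ->
     Mx A (fun a => D a * fst (f a)) (fun a => D a * snd (f a)) (fun a => D a)
     (fun a => IZR (fst a)) (fun a => IZR (snd a)) (fun _ => 1) i j = MD D i j).
  { intros i j Hi Hj. unfold Mx, MD. apply sumR_ext; intros a _.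
    destruct Hi as [ E1 | [ E1 | E1 ] ]; destruct Hj as [ E2 | [ E2 | E2 ] ]; subst i j; simpl; ring. }
  unfold detD. rewrite <- !E by lia. rewrite CB. apply S3_ext. intros a b c.
  unfold Gp, Gq, det3, orient, toR; simpl. ring.
Qed.

Lemma MD_lin D1 D2 (t : R) i j : MD (fun a => (1 - t) * D1 a + t * D2 a) i j =
  t * (MD D2 i j - MD D1 i j) + MD D1 i j.
Proof.
  unfold MD. rewrite <- sumR_minus, <- sumR_scal, <- sumR_plus. apply sumR_ext; intros; ring.
Qed.

Definition ind3 (t0 t1 t2 : lpt) (a : lpt) : R :=
  (if lpt_eq_dec a t0 then 1 else 0) + (if lpt_eq_dec a t1 then 1 else 0) +
  (if lpt_eq_dec a t2 then 1 else 0).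

Lemma sum_ind1 (t : lpt) (g : lpt -> R) : In t A ->
  sumR A (fun a => (if lpt_eq_dec a t then 1 else 0) * g a) = g t.
Proof.
  intros Ht. rewrite (sumR_single A _ t Hnd Ht).
  - destruct (lpt_eq_dec t t); [ring|congruence].
  - intros a _ Ha. destruct (lpt_eq_dec a t); [congruence|ring].
Qed.

Lemma MD_ind t0 t1 t2 e i j : In t0 A -> In t1 A -> In t2 A ->
  MD (fun a => e + ind3 t0 t1 t2 a) i j =
  e * MD (fun _ => 1) i j + (PP f i t0 * QQ j t0 + PP f i t1 * QQ j t1 + PP f i t2 * QQ j t2).
Proof.
  intros H0 H1 H2. unfold MD, ind3.
  rewrite (sumR_ext A _ (fun a => e * (1 * PP f i a * QQ j a) +
     ((if lpt_eq_dec a t0 then 1 else 0) * (PP f i a * QQ j a) +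
      (if lpt_eq_dec a t1 then 1 else 0) * (PP f i a * QQ j a) +
      (if lpt_eq_dec a t2 then 1 else 0) * (PP f i a * QQ j a)))) by (intros; ring).
  rewrite !sumR_plus, sumR_scal, !sum_ind1 by auto. ring.
Qed.

Lemma psi_cont t0 t1 t2 : In t0 A -> In t1 A -> In t2 A ->
  continuity (fun e => detD (fun a => e + ind3 t0 t1 t2 a)).
Proof.
  intros H0 H1 H2. unfold detD. 
  assert (Ext : forall e, det3 (MD (fun a => e + ind3 t0 t1 t2 a) 1 1) (MD (fun a => e + ind3 t0 t1 t2 a) 1 2)
    (MD (fun a => e + ind3 t0 t1 t2 a) 1 3) (MD (fun a => e + ind3 t0 t1 t2 a) 2 1)
    (MD (fun a => e + ind3 t0 t1 t2 a) 2 2) (MD (fun a => e + ind3 t0 t1 t2 a) 2 3)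
    (MD (fun a => e + ind3 t0 t1 t2 a) 3 1) (MD (fun a => e + ind3 t0 t1 t2 a) 3 2)
    (MD (fun a => e + ind3 t0 t1 t2 a) 3 3) =
    det3 (e * MD (fun _ => 1) 1 1 + (PP f 1 t0 * QQ 1 t0 + PP f 1 t1 * QQ 1 t1 + PP f 1 t2 * QQ 1 t2))
         (e * MD (fun _ => 1) 1 2 + (PP f 1 t0 * QQ 2 t0 + PP f 1 t1 * QQ 2 t1 + PP f 1 t2 * QQ 2 t2))
         (e * MD (fun _ => 1) 1 3 + (PP f 1 t0 * QQ 3 t0 + PP f 1 t1 * QQ 3 t1 + PP f 1 t2 * QQ 3 t2))
         (e * MD (fun _ => 1) 2 1 + (PP f 2 t0 * QQ 1 t0 + PP f 2 t1 * QQ 1 t1 + PP f 2 t2 * QQ 1 t2))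
         (e * MD (fun _ => 1) 2 2 + (PP f 2 t0 * QQ 2 t0 + PP f 2 t1 * QQ 2 t1 + PP f 2 t2 * QQ 2 t2))
         (e * MD (fun _ => 1) 2 3 + (PP f 2 t0 * QQ 3 t0 + PP f 2 t1 * QQ 3 t1 + PP f 2 t2 * QQ 3 t2))
         (e * MD (fun _ => 1) 3 1 + (PP f 3 t0 * QQ 1 t0 + PP f 3 t1 * QQ 1 t1 + PP f 3 t2 * QQ 1 t2))
         (e * MD (fun _ => 1) 3 2 + (PP f 3 t0 * QQ 2 t0 + PP f 3 t1 * QQ 2 t1 + PP f 3 t2 * QQ 2 t2))
         (e * MD (fun _ => 1) 3 3 + (PP f 3 t0 * QQ 3 t0 + PP f 3 t1 * QQ 3 t1 + PP f 3 t2 * QQ 3 t2))).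
  { intros e. rewrite !MD_ind by auto. reflexivity. }
  intros e0. apply (continuity_pt_ext (fun e => det3 (e * MD (fun _ => 1) 1 1 + (PP f 1 t0 * QQ 1 t0 + PP f 1 t1 * QQ 1 t1 + PP f 1 t2 * QQ 1 t2))
         (e * MD (fun _ => 1) 1 2 + (PP f 1 t0 * QQ 2 t0 + PP f 1 t1 * QQ 2 t1 + PP f 1 t2 * QQ 2 t2))
         (e * MD (fun _ => 1) 1 3 + (PP f 1 t0 * QQ 3 t0 + PP f 1 t1 * QQ 3 t1 + PP f 1 t2 * QQ 3 t2))
         (e * MD (fun _ => 1) 2 1 + (PP f 2 t0 * QQ 1 t0 + PP f 2 t1 * QQ 1 t1 + PP f 2 t2 * QQ 1 t2))
         (e * MD (fun _ => 1) 2 2 + (PP f 2 t0 * QQ 2 t0 + PP f 2 t1 * QQ 2 t1 + PP f 2 t2 * QQ 2 t2))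
         (e * MD (fun _ => 1) 2 3 + (PP f 2 t0 * QQ 3 t0 + PP f 2 t1 * QQ 3 t1 + PP f 2 t2 * QQ 3 t2))
         (e * MD (fun _ => 1) 3 1 + (PP f 3 t0 * QQ 1 t0 + PP f 3 t1 * QQ 1 t1 + PP f 3 t2 * QQ 1 t2))
         (e * MD (fun _ => 1) 3 2 + (PP f 3 t0 * QQ 2 t0 + PP f 3 t1 * QQ 2 t1 + PP f 3 t2 * QQ 2 t2))
         (e * MD (fun _ => 1) 3 3 + (PP f 3 t0 * QQ 3 t0 + PP f 3 t1 * QQ 3 t1 + PP f 3 t2 * QQ 3 t2)))).
  - intros e; symmetry; apply Ext.
  - unfold det3. reg.
Qed.

Lemma psi0 t0 t1 t2 : In t0 A -> In t1 A -> In t2 A ->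
  detD (fun a => 0 + ind3 t0 t1 t2 a) =
  orient (f t0) (f t1) (f t2) * orient (toR t0) (toR t1) (toR t2).
Proof.
  intros H0 H1 H2. unfold detD. rewrite !MD_ind by auto.
  unfold PP, QQ, det3, orient, toR; simpl. ring.
Qed.

Lemma cont_sign (g : R -> R) : continuity_pt g 0 -> g 0 <> 0 ->
  exists e, 0 < e /\ 0 < g e * g 0.
Proof.
  intros C N.
  unfold continuity_pt, continue_in, limit1_in, limit_in in C. simpl in C.
  destruct (C (Rabs (g 0))) as [alp [Ha Hc]]; [apply Rabs_pos_lt; auto|].
  exists (alp / 2). split; [lra|].
  assert (Hd : Rabs (g (alp / 2) - g 0) < Rabs (g 0)).
  { apply Hc. split. - unfold D_x, no_cond; split; auto; lra.
    - unfold R_dist. rewrite Rminus_0_r, Rabs_right; lra. }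
  destruct (Rlt_dec 0 (g 0)) as [P|P].
  - rewrite (Rabs_right (g 0)) in Hd by lra.
    apply Rabs_def2 in Hd. nra.
  - rewrite (Rabs_left (g 0)) in Hd by lra.
    apply Rabs_def2 in Hd. nra.
Qed.

Lemma good_D t0 t1 t2 : In t0 A -> In t1 A -> In t2 A ->
  orient (f t0) (f t1) (f t2) * orient (toR t0) (toR t1) (toR t2) <> 0 ->
  exists D, (forall a, 0 < D a) /\
    0 < detD D * (orient (f t0) (f t1) (f t2) * orient (toR t0) (toR t1) (toR t2)).
Proof.
  intros H0 H1 H2 N.
  pose proof (psi_cont t0 t1 t2 H0 H1 H2) as C.
  destruct (cont_sign (fun e => detD (fun a => e + ind3 t0 t1 t2 a)) (C 0)) as [e [He Pe]].
  { rewrite psi0; auto. }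
  simpl in Pe. rewrite psi0 in Pe by auto.
  exists (fun a => e + ind3 t0 t1 t2 a). split; auto.
  intros a. unfold ind3. destruct (lpt_eq_dec a t0); destruct (lpt_eq_dec a t1);
  destruct (lpt_eq_dec a t2); lra.
Qed.

Lemma W1 : ~ weakly_compatible A f ->
  exists D, (forall a, 0 < D a) /\ detD D = 0.
Proof.
  intros Nwc.
  destruct (classic (exists t0 t1 t2, In t0 A /\ In t1 A /\ In t2 A /\
      orient (toR t0) (toR t1) (toR t2) <> 0 /\ orient (f t0) (f t1) (f t2) <> 0))
    as [[t0 [t1 [t2 [T0 [T1 [T2 [OA Of]]]]]]]|Ng].
  - destruct (classic (exists b0 b1 b2, In b0 A /\ In b1 A /\ In b2 A /\
        orient (toR t0) (toR t1) (toR t2) * orient (toR b0) (toR b1) (toR b2) > 0 /\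
        orient (f b0) (f b1) (f b2) <> 0 /\
        ~ (orient (f t0) (f t1) (f t2) * orient (f b0) (f b1) (f b2) > 0)))
      as [[b0 [b1 [b2 [B0 [B1 [B2 [OAb [Ofb Nb]]]]]]]]|Nb].
    + assert (Pt : orient (f t0) (f t1) (f t2) * orient (toR t0) (toR t1) (toR t2) <> 0)
        by (apply Rmult_integral_contrapositive; auto).
      assert (OAb' : orient (toR b0) (toR b1) (toR b2) <> 0) by (intro E; rewrite E in OAb; lra).
      assert (Pb : orient (f b0) (f b1) (f b2) * orient (toR b0) (toR b1) (toR b2) <> 0)
        by (apply Rmult_integral_contrapositive; auto).
      assert (Opp : (orient (f t0) (f t1) (f t2) * orient (toR t0) (toR t1) (toR t2)) *
                    (orient (f b0) (f b1) (f b2) * orient (toR b0) (toR b1) (toR b2)) < 0).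
      { assert (orient (f t0) (f t1) (f t2) * orient (f b0) (f b1) (f b2) < 0).
        { assert (orient (f t0) (f t1) (f t2) * orient (f b0) (f b1) (f b2) <> 0)
            by (apply Rmult_integral_contrapositive; auto). lra. }
        nra. }
      destruct (good_D t0 t1 t2 T0 T1 T2 Pt) as [D1 [HD1 S1]].
      destruct (good_D b0 b1 b2 B0 B1 B2 Pb) as [D2 [HD2 S2]].
      set (Phi := fun t => detD (fun a => (1 - t) * D1 a + t * D2 a)).
      assert (Cphi : continuity Phi).
      { unfold Phi, detD. intros t0'.
        apply (continuity_pt_ext (fun t => det3
          (t * (MD D2 1 1 - MD D1 1 1) + MD D1 1 1) (t * (MD D2 1 2 - MD D1 1 2) + MD D1 1 2)
          (t * (MD D2 1 3 - MD D1 1 3) + MD D1 1 3) (t * (MD D2 2 1 - MD D1 2 1) + MD D1 2 1)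
          (t * (MD D2 2 2 - MD D1 2 2) + MD D1 2 2) (t * (MD D2 2 3 - MD D1 2 3) + MD D1 2 3)
          (t * (MD D2 3 1 - MD D1 3 1) + MD D1 3 1) (t * (MD D2 3 2 - MD D1 3 2) + MD D1 3 2)
          (t * (MD D2 3 3 - MD D1 3 3) + MD D1 3 3))).
        - intros t. rewrite !MD_lin. reflexivity.
        - unfold det3. reg. }
      assert (P0 : Phi 0 = detD D1).
      { unfold Phi. f_equal. apply functional_extensionality; intros; ring. }
      assert (P1 : Phi 1 = detD D2).
      { unfold Phi. f_equal. apply functional_extensionality; intros; ring. }
      assert (Sg : Phi 0 * Phi 1 <= 0).
      { rewrite P0, P1. set (pt0 := orient (f t0) (f t1) (f t2) * orient (toR t0) (toR t1) (toR t2)) in *.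
        set (pb := orient (f b0) (f b1) (f b2) * orient (toR b0) (toR b1) (toR b2)) in *.
        assert (0 < (detD D1 * pt0) * (detD D2 * pb)) by (apply Rmult_lt_0_compat; auto).
        nra. }
      destruct (IVT_cor Phi 0 1 Cphi ltac:(lra) Sg) as [t [Ht Zt]].
      exists (fun a => (1 - t) * D1 a + t * D2 a). split; [|exact Zt].
      intros a. specialize (HD1 a). specialize (HD2 a). nra.
    + exfalso. apply Nwc. exists t0, t1, t2. repeat split; auto.
      intros b0 b1 b2 B0 B1 B2 Ob Fb. apply NNPP; intro N. apply Nb. exists b0, b1, b2; repeat split; auto.
  - exists (fun _ => 1). split; [intros; lra|].
    assert (E : 6 * detD (fun _ => 1) = 0).
    { rewrite detD_CB. rewrite (S3_ext_in A _ (fun _ _ _ => 0)).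
      - unfold S3. rewrite (sumR_ext A _ (fun _ => 0)); [apply sumR_const0|].
        intros. rewrite (sumR_ext A _ (fun _ => 0)); [apply sumR_const0|].
        intros. apply sumR_const0.
      - intros a b c Ha Hb Hc.
        destruct (Req_dec (orient (toR a) (toR b) (toR c)) 0) as [E|E]; [rewrite E; ring|].
        destruct (Req_dec (orient (f a) (f b) (f c)) 0) as [E'|E']; [rewrite E'; ring|].
        exfalso; apply Ng; exists a, b, c; auto. }
    lra.
Qed.

End W1.

Definition par (u1 u2 u3 r1 r2 r3 : R) :=
  r2 * u3 - r3 * u2 = 0 /\ r3 * u1 - r1 * u3 = 0 /\ r1 * u2 - r2 * u1 = 0.

Lemma par_ker u1 u2 u3 r11 r12 r13 r21 r22 r23 r31 r32 r33 :
  ~ (u1 = 0 /\ u2 = 0 /\ u3 = 0) ->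
  par u1 u2 u3 r11 r12 r13 -> par u1 u2 u3 r21 r22 r23 -> par u1 u2 u3 r31 r32 r33 ->
  exists c1 c2 c3, (c1 <> 0 \/ c2 <> 0 \/ c3 <> 0) /\
    r11 * c1 + r12 * c2 + r13 * c3 = 0 /\ r21 * c1 + r22 * c2 + r23 * c3 = 0 /\
    r31 * c1 + r32 * c2 + r33 * c3 = 0.
Proof.
  intros Nu [P1 [P2 P3]] [Q1 [Q2 Q3]] [S1 [S2 S3]].
  destruct (Req_dec u1 0) as [E1|E1].
  - destruct (Req_dec u2 0) as [E2|E2].
    + destruct (Req_dec u3 0) as [E3|E3]; [exfalso; apply Nu; auto|].
      exists 0, u3, (- u2). repeat split; [right; left; auto| |nra|nra]; nra.
    + exists 0, u3, (- u2). repeat split; [right; right; lra| | |]; nra.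
  - exists (- u3), 0, u1. repeat split; [right; right; auto| | |]; nra.
Qed.

Lemma ker3 r11 r12 r13 r21 r22 r23 r31 r32 r33 :
  det3 r11 r12 r13 r21 r22 r23 r31 r32 r33 = 0 ->
  exists c1 c2 c3, (c1 <> 0 \/ c2 <> 0 \/ c3 <> 0) /\
    r11 * c1 + r12 * c2 + r13 * c3 = 0 /\ r21 * c1 + r22 * c2 + r23 * c3 = 0 /\
    r31 * c1 + r32 * c2 + r33 * c3 = 0.
Proof.
  intros Hd. unfold det3 in Hd.
  destruct (classic (r12 * r23 - r13 * r22 = 0 /\ r13 * r21 - r11 * r23 = 0 /\ r11 * r22 - r12 * r21 = 0))
    as [Z12|N12].
  2:{ exists (r12 * r23 - r13 * r22), (r13 * r21 - r11 * r23), (r11 * r22 - r12 * r21).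
      split. { apply NNPP; intro N. apply N12. repeat split; apply NNPP; intro N'; apply N; auto. }
      repeat split; [ring|ring|]. lra. }
  destruct (classic (r12 * r33 - r13 * r32 = 0 /\ r13 * r31 - r11 * r33 = 0 /\ r11 * r32 - r12 * r31 = 0))
    as [Z13|N13].
  2:{ exists (r12 * r33 - r13 * r32), (r13 * r31 - r11 * r33), (r11 * r32 - r12 * r31).
      split. { apply NNPP; intro N. apply N13. repeat split; apply NNPP; intro N'; apply N; auto. }
      repeat split; [ring| |ring]. lra. }
  destruct (classic (r22 * r33 - r23 * r32 = 0 /\ r23 * r31 - r21 * r33 = 0 /\ r21 * r32 - r22 * r31 = 0))
    as [Z23|N23].
  2:{ exists (r22 * r33 - r23 * r32), (r23 * r31 - r21 * r33), (r21 * r32 - r22 * r31).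
      split. { apply NNPP; intro N. apply N23. repeat split; apply NNPP; intro N'; apply N; auto. }
      repeat split; [|ring|ring]. lra. }
  destruct Z12 as [A1 [A2 A3]]. destruct Z13 as [B1 [B2 B3]]. destruct Z23 as [C1 [C2 C3]].
  destruct (classic (r11 = 0 /\ r12 = 0 /\ r13 = 0)) as [Z1|N1].
  2:{ apply (par_ker r11 r12 r13); auto; unfold par; repeat split; lra. }
  destruct (classic (r21 = 0 /\ r22 = 0 /\ r23 = 0)) as [Z2|N2].
  2:{ apply (par_ker r21 r22 r23); auto; unfold par; destruct Z1 as [-> [-> ->]]; repeat split; lra. }
  destruct (classic (r31 = 0 /\ r32 = 0 /\ r33 = 0)) as [Z3|N3].
  2:{ apply (par_ker r31 r32 r33); auto; unfold par;
      destruct Z1 as [-> [-> ->]]; destruct Z2 as [-> [-> ->]]; repeat split; lra. }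
  exists 1, 0, 0. destruct Z1 as [-> [-> ->]]; destruct Z2 as [-> [-> ->]]; destruct Z3 as [-> [-> ->]].
  repeat split; try lra.
Qed.

Lemma three_on_line h p q r : hval h p = 0 -> hval h q = 0 -> hval h r = 0 ->
  (nx h <> 0 \/ ny h <> 0) -> orient p q r = 0.
Proof.
  intros Hp Hq Hr N.
  assert (I1 : orient p q r * nx h = (snd r - snd p) * (hval h q - hval h p) - (snd q - snd p) * (hval h r - hval h p))
    by (rewrite !hval_eq; unfold orient; ring).
  assert (I2 : orient p q r * ny h = (fst q - fst p) * (hval h r - hval h p) - (fst r - fst p) * (hval h q - hval h p))
    by (rewrite !hval_eq; unfold orient; ring).
  rewrite Hp, Hq, Hr in I1, I2.
  destruct N as [N|N].
  - apply (Rmult_eq_reg_r (nx h)); auto. rewrite I1. ring.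
  - apply (Rmult_eq_reg_r (ny h)); auto. rewrite I2. ring.
Qed.

Lemma sumR_cont {T} (l : list T) (F : T -> R -> R) s :
  (forall t, In t l -> continuity_pt (F t) s) -> continuity_pt (fun s => sumR l (fun t => F t s)) s.
Proof.
  induction l as [|x l IH]; simpl; intros C.
  - apply continuity_pt_const. intros a b; auto.
  - apply (continuity_pt_ext (plus_fct (F x) (fun s => sumR l (fun t => F t s)))).
    + intros; reflexivity.
    + apply continuity_pt_plus; auto.
Qed.

Lemma ln_cont_comp (g : R -> R) (x : R) : 0 < g x -> continuity_pt g x -> continuity_pt (fun s => ln (g s)) x.
Proof. intros. apply continuity_pt_comp with (f1 := g) (f2 := ln); auto.
  apply derivable_continuous_pt. exists (/ g x). apply derivable_pt_lim_ln; auto. Qed.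

Section W2.
Variable A : list lpt.
Variable H : list aform.
Variable f : lpt -> pt.
Hypothesis Hnd : NoDup A.
Hypothesis Hed : edge_data A H.
Hypothesis Hpoly : is_polygon A.

Lemma interior_pt : exists x0, in_hull A x0 /\ forall h, In h H -> 1/3 <= hval h x0.
Proof.
  destruct Hpoly as [a0 [a1 [a2 [H0 [H1 [H2 O]]]]]].
  set (x0 := ((IZR (fst a0) + IZR (fst a1) + IZR (fst a2)) / 3, (IZR (snd a0) + IZR (snd a1) + IZR (snd a2)) / 3)).
  assert (Hh : forall h, In h H -> 1/3 <= hval h x0).
  { intros h Hh.
    assert (E : hval h x0 = (hval h (toR a0) + hval h (toR a1) + hval h (toR a2)) / 3)
      by (unfold x0; rewrite !hval_eq; unfold toR; simpl; field).
    rewrite E, !hval_toR.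
    pose proof (hvalZ_A_nonneg A H Hnd Hed h a0 Hh H0).
    pose proof (hvalZ_A_nonneg A H Hnd Hed h a1 Hh H1).
    pose proof (hvalZ_A_nonneg A H Hnd Hed h a2 Hh H2).
    destruct (Z.eq_dec (hvalZ h a0 + hvalZ h a1 + hvalZ h a2) 0) as [Z|Z].
    - exfalso. apply O. apply (three_on_line h).
      + rewrite hval_toR. replace (hvalZ h a0) with 0%Z by lia. auto.
      + rewrite hval_toR. replace (hvalZ h a1) with 0%Z by lia. auto.
      + rewrite hval_toR. replace (hvalZ h a2) with 0%Z by lia. auto.
      + apply (normal_nonzero A H Hed); auto.
    - assert (Q : 1 <= IZR (hvalZ h a0 + hvalZ h a1 + hvalZ h a2)) by (apply IZR_le; lia).
      rewrite !plus_IZR in Q. lra. }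
  exists x0. split; auto. apply (ed_hull A H Hed). intros h Hh'. specialize (Hh h Hh'). lra.
Qed.

Lemma mono_ln (x0 y : pt) : (forall h, In h H -> 0 < hval h x0) -> (forall h, In h H -> 0 < hval h y) ->
  y <> x0 ->
  0 < (fst y - fst x0) * sumR H (fun h => ln (hval h y / hval h x0) * nx h) +
      (snd y - snd x0) * sumR H (fun h => ln (hval h y / hval h x0) * ny h).
Proof.
  intros Px Py Nxy.
  rewrite <- !sumR_scal, <- sumR_plus.
  rewrite (sumR_ext H _ (fun h => ln (hval h y / hval h x0) * (hval h y - hval h x0)))
    by (intros h _; rewrite !hval_eq; ring).
  assert (T : forall h, In h H -> 0 <= ln (hval h y / hval h x0) * (hval h y - hval h x0) /\
     (ln (hval h y / hval h x0) * (hval h y - hval h x0) = 0 -> hval h x0 = hval h y))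
    by (intros; apply ln_sign_prod; auto).
  destruct (Req_dec (sumR H (fun h => ln (hval h y / hval h x0) * (hval h y - hval h x0))) 0) as [Z|Z].
  - exfalso. apply Nxy. symmetry. apply (hval_equal_pts A H Hnd Hed Hpoly).
    intros h Hh. apply (T h Hh). apply (sumR_zero_nonneg H _ (fun h Hh => proj1 (T h Hh)) Z h Hh).
  - assert (0 <= sumR H (fun h => ln (hval h y / hval h x0) * (hval h y - hval h x0)))
      by (apply sumR_nonneg; intros; apply T; auto). lra.
Qed.

End W2.

Section W4.
Variable A : list lpt.
Variable H : list aform.
Hypothesis Hnd : NoDup A.
Hypothesis Hed : edge_data A H.
Hypothesis Hpoly : is_polygon A.

Lemma abs_bound_coef (s a b : R) : 0 <= s <= 1 ->
  Rabs ((1 - 2 * s) * a + 4 * s * (1 - s) * b) <= Rabs a + Rabs b.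
Proof.
  intros Hs. eapply Rle_trans; [apply Rabs_triang|].
  rewrite !Rabs_mult.
  assert (Rabs (1 - 2 * s) <= 1) by (apply Rabs_le; lra).
  assert (E : Rabs (4 * s * (1 - s)) <= 1).
  { rewrite Rabs_right by nra. pose proof (Rle_0_sqr (2*s-1)) as Sq; unfold Rsqr in Sq; nra. }
  assert (E4 : Rabs (4 * s * (1 - s)) = Rabs 4 * Rabs s * Rabs (1 - s)) by (rewrite !Rabs_mult; ring).
  pose proof (Rabs_pos a). pose proof (Rabs_pos b). pose proof (Rabs_pos (1 - 2 * s)).
  rewrite <- E4.
  pose proof (Rabs_pos (4 * s * (1 - s))). nra.
Qed.

Lemma W4 (x0 : pt) (l1 l2 : R) : (forall h, In h H -> 1/3 <= hval h x0) -> ~ (l1 = 0 /\ l2 = 0) ->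
  exists y0 mu, y0 <> x0 /\ (forall h, In h H -> 0 < hval h y0) /\ mu <> 0 /\
    sumR H (fun h => ln (hval h y0 / hval h x0) * nx h) = mu * l1 /\
    sumR H (fun h => ln (hval h y0 / hval h x0) * ny h) = mu * l2.
Proof.
  intros Hx0 Nl.
  assert (Ll : 0 < l1 * l1 + l2 * l2).
  { destruct (Req_dec l1 0) as [E1|E1]; [destruct (Req_dec l2 0) as [E2|E2]; [exfalso; auto|]|].
    - assert (0 < l2 * l2) by (apply Rsqr_pos_lt; auto). nra.
    - assert (0 < l1 * l1) by (apply Rsqr_pos_lt; auto). nra. }
  set (NB := sumR H (fun h => Rabs (nx h) + Rabs (ny h))).
  assert (NB0 : 0 <= NB) by (apply sumR_nonneg; intros; pose proof (Rabs_pos (nx a)); pose proof (Rabs_pos (ny a)); lra).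
  set (LB := Rabs l1 + Rabs l2).
  assert (LB0 : 0 <= LB) by (unfold LB; pose proof (Rabs_pos l1); pose proof (Rabs_pos l2); lra).
  set (rho := 1 / (6 * (1 + NB) * (1 + LB))).
  assert (Rho : 0 < rho) by (unfold rho; apply Rdiv_lt_0_compat; [lra|]; apply Rmult_lt_0_compat; [|lra]; lra).
  assert (RhoB : NB * (rho * LB) <= 1 / 6).
  { unfold rho. unfold Rdiv. rewrite Rmult_1_l.
    replace (NB * (/ (6 * (1 + NB) * (1 + LB)) * LB)) with ((NB * LB) / (6 * (1 + NB) * (1 + LB))) by (field; lra).
    apply (Rmult_le_reg_r (6 * (1 + NB) * (1 + LB))); [apply Rmult_lt_0_compat; lra|].
    unfold Rdiv. rewrite Rmult_assoc, Rinv_l by (apply Rgt_not_eq; apply Rmult_lt_0_compat; lra). nra. }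
  set (d1 := fun s => rho * ((1 - 2 * s) * (- l2) + 4 * s * (1 - s) * l1)).
  set (d2 := fun s => rho * ((1 - 2 * s) * l1 + 4 * s * (1 - s) * l2)).
  set (yp := fun s => (fst x0 + d1 s, snd x0 + d2 s)).
  assert (Hyp : forall s h, 0 <= s <= 1 -> In h H -> 1/6 <= hval h (yp s)).
  { intros s h Hs Hh.
    assert (E : hval h (yp s) = hval h x0 + (nx h * d1 s + ny h * d2 s)) by (unfold yp; rewrite !hval_eq; simpl; ring).
    rewrite E.
    assert (B1 : Rabs (d1 s) <= rho * LB).
    { unfold d1. rewrite Rabs_mult, (Rabs_right rho) by lra. apply Rmult_le_compat_l; [lra|].
      unfold LB. rewrite (Rplus_comm (Rabs l1)). rewrite <- (Rabs_Ropp l2). apply abs_bound_coef; auto. }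
    assert (B2 : Rabs (d2 s) <= rho * LB).
    { unfold d2. rewrite Rabs_mult, (Rabs_right rho) by lra. apply Rmult_le_compat_l; [lra|].
      apply abs_bound_coef; auto. }
    assert (Bh : Rabs (nx h) + Rabs (ny h) <= NB).
    { apply (sumR_in_le H (fun h => Rabs (nx h) + Rabs (ny h)) h); auto.
      intros; pose proof (Rabs_pos (nx a)); pose proof (Rabs_pos (ny a)); lra. }
    assert (Bs : Rabs (nx h * d1 s + ny h * d2 s) <= NB * (rho * LB)).
    { eapply Rle_trans; [apply Rabs_triang|]. rewrite !Rabs_mult.
      pose proof (Rabs_pos (nx h)). pose proof (Rabs_pos (ny h)).
      pose proof (Rabs_pos (d1 s)). pose proof (Rabs_pos (d2 s)).
      assert (Rabs (nx h) * Rabs (d1 s) <= Rabs (nx h) * (rho * LB)) by (apply Rmult_le_compat_l; auto).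
      assert (Rabs (ny h) * Rabs (d2 s) <= Rabs (ny h) * (rho * LB)) by (apply Rmult_le_compat_l; auto).
      assert (0 <= rho * LB) by nra. nra. }
    specialize (Hx0 h Hh). pose proof (Rle_abs (- (nx h * d1 s + ny h * d2 s))) as Ab.
    rewrite Rabs_Ropp in Ab. lra. }
  assert (Px0 : forall h, In h H -> 0 < hval h x0) by (intros h Hh; specialize (Hx0 h Hh); lra).
  set (S1 := fun s => sumR H (fun h => ln (hval h (yp s) / hval h x0) * nx h)).
  set (S2 := fun s => sumR H (fun h => ln (hval h (yp s) / hval h x0) * ny h)).
  set (Phi := fun s => l1 * S2 s - l2 * S1 s).
  assert (Mono : forall s, 0 <= s <= 1 -> yp s <> x0 -> 0 < d1 s * S1 s + d2 s * S2 s).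
  { intros s Hs N. pose proof (mono_ln A H Hnd Hed Hpoly x0 (yp s) Px0) as M.
    unfold S1, S2. replace (d1 s) with (fst (yp s) - fst x0) by (unfold yp; simpl; ring).
    replace (d2 s) with (snd (yp s) - snd x0) by (unfold yp; simpl; ring).
    apply M; auto. intros h Hh; specialize (Hyp s h Hs Hh); lra. }
  assert (Nz : forall s, 0 <= s <= 1 -> yp s <> x0).
  { intros s Hs E. unfold yp in E. destruct x0 as [x1 x2]. simpl in E. injection E as E1 E2.
    assert (D1 : (1 - 2 * s) * (- l2) + 4 * s * (1 - s) * l1 = 0).
    { apply (Rmult_eq_reg_l rho); [|lra]. unfold d1 in E1. lra. }
    assert (D2 : (1 - 2 * s) * l1 + 4 * s * (1 - s) * l2 = 0).
    { apply (Rmult_eq_reg_l rho); [|lra]. unfold d2 in E2. lra. }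
    assert (Q1 : (1 - 2 * s) * (l1 * l1 + l2 * l2) =
      - l2 * ((1 - 2 * s) * (- l2) + 4 * s * (1 - s) * l1) + l1 * ((1 - 2 * s) * l1 + 4 * s * (1 - s) * l2)) by ring.
    assert (Q2 : (4 * s * (1 - s)) * (l1 * l1 + l2 * l2) =
      l1 * ((1 - 2 * s) * (- l2) + 4 * s * (1 - s) * l1) + l2 * ((1 - 2 * s) * l1 + 4 * s * (1 - s) * l2)) by ring.
    rewrite D1, D2 in Q1, Q2. replace (- l2 * 0 + l1 * 0) with 0 in Q1 by ring.
    replace (l1 * 0 + l2 * 0) with 0 in Q2 by ring.
    apply Rmult_integral in Q1. apply Rmult_integral in Q2.
    destruct Q1 as [Q1|Q1]; [|lra]. destruct Q2 as [Q2|Q2]; [|lra].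
    assert (s = 1/2) by lra. subst. lra. }
  assert (Phi0 : 0 < Phi 0).
  { pose proof (Mono 0 ltac:(lra) (Nz 0 ltac:(lra))) as M.
    unfold d1, d2 in M. unfold Phi.
    replace (rho * ((1 - 2 * 0) * - l2 + 4 * 0 * (1 - 0) * l1) * S1 0 +
             rho * ((1 - 2 * 0) * l1 + 4 * 0 * (1 - 0) * l2) * S2 0) with
      (rho * (l1 * S2 0 - l2 * S1 0)) in M by ring.
    apply (Rmult_lt_reg_l rho); lra. }
  assert (Phi1 : Phi 1 < 0).
  { pose proof (Mono 1 ltac:(lra) (Nz 1 ltac:(lra))) as M.
    unfold d1, d2 in M. unfold Phi.
    replace (rho * ((1 - 2 * 1) * - l2 + 4 * 1 * (1 - 1) * l1) * S1 1 +
             rho * ((1 - 2 * 1) * l1 + 4 * 1 * (1 - 1) * l2) * S2 1) with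
      (- (rho * (l1 * S2 1 - l2 * S1 1))) in M by ring.
    assert (0 < rho * (l1 * S2 1 - l2 * S1 1) \/ rho * (l1 * S2 1 - l2 * S1 1) <= 0) as [C|C] by lra; [lra|].
    destruct (Rle_dec 0 (l1 * S2 1 - l2 * S1 1)); [|lra].
    assert (0 <= rho * (l1 * S2 1 - l2 * S1 1)) by (apply Rmult_le_pos; lra). lra. }
  assert (CG : forall s h, 0 <= s <= 1 -> In h H -> continuity_pt (fun s => ln (hval h (yp s) / hval h x0)) s).
  { intros s h Hs Hh. apply ln_cont_comp; [apply Rdiv_lt_0_compat; [specialize (Hyp s h Hs Hh); lra|auto]|].
    apply (continuity_pt_ext (fun s => (nx h * (fst x0 + d1 s) + ny h * (snd x0 + d2 s) + cz h) / hval h x0)).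
    - intros u; unfold yp; rewrite (hval_eq h (fst x0 + d1 u, snd x0 + d2 u)); reflexivity.
    - unfold d1, d2. specialize (Px0 h Hh). reg. }
  assert (CS : forall (k : aform -> R) s, 0 <= s <= 1 ->
      continuity_pt (fun s => sumR H (fun h => ln (hval h (yp s) / hval h x0) * k h)) s).
  { intros k s Hs. apply (sumR_cont H (fun h s => ln (hval h (yp s) / hval h x0) * k h)).
    intros h Hh. apply (continuity_pt_ext (mult_fct (fun s => ln (hval h (yp s) / hval h x0)) (fct_cte (k h)))).
    - intros; reflexivity.
    - apply continuity_pt_mult; [apply CG; auto|apply continuity_pt_const; intros u v; reflexivity]. }
  assert (Cont : forall s, 0 <= s <= 1 -> continuity_pt (fun s => - Phi s) s).
  { intros s Hs.
    apply (continuity_pt_ext (opp_fct (minus_fct (mult_real_fct l1 S2) (mult_real_fct l2 S1)))).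
    - intros; reflexivity.
    - apply continuity_pt_opp. apply continuity_pt_minus; apply continuity_pt_scal; apply CS; auto. }
  destruct (Ranalysis5.IVT_interv (fun s => - Phi s) 0 1 Cont ltac:(lra) ltac:(lra) ltac:(lra)) as [s [Hs Zs]].
  assert (Ps : Phi s = 0) by lra.
  pose proof (Mono s Hs (Nz s Hs)) as Ms.
  set (mu := (l1 * S1 s + l2 * S2 s) / (l1 * l1 + l2 * l2)).
  unfold Phi in Ps.
  assert (K : l1 * S2 s = l2 * S1 s) by lra.
  assert (K1 : l2 * (l1 * S2 s) = l2 * (l2 * S1 s)) by (rewrite K; ring).
  assert (K2 : l1 * (l1 * S2 s) = l1 * (l2 * S1 s)) by (rewrite K; ring).
  assert (E1 : S1 s = mu * l1).
  { unfold mu. apply (Rmult_eq_reg_r (l1 * l1 + l2 * l2)); [|lra].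
    unfold Rdiv. replace ((l1 * S1 s + l2 * S2 s) * / (l1 * l1 + l2 * l2) * l1 * (l1 * l1 + l2 * l2))
      with ((l1 * S1 s + l2 * S2 s) * l1) by (field; lra). lra. }
  assert (E2 : S2 s = mu * l2).
  { unfold mu. apply (Rmult_eq_reg_r (l1 * l1 + l2 * l2)); [|lra].
    unfold Rdiv. replace ((l1 * S1 s + l2 * S2 s) * / (l1 * l1 + l2 * l2) * l2 * (l1 * l1 + l2 * l2))
      with ((l1 * S1 s + l2 * S2 s) * l2) by (field; lra). lra. }
  exists (yp s), mu. split; [apply Nz; auto|]. split; [intros h Hh; specialize (Hyp s h Hs Hh); lra|].
  split; [|split; auto].
  intro Z. rewrite E1, E2, Z in Ms. lra.
Qed.

End W4.

Section W5.
Variable A : list lpt.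
Variable H : list aform.
Variable f : lpt -> pt.
Hypothesis Hnd : NoDup A.
Hypothesis Hed : edge_data A H.
Hypothesis Hpoly : is_polygon A.

Lemma dir2_wc : (forall w, pos_weights A w -> injective_on_hull A (patch A H w f)) ->
  weakly_compatible A f.
Proof.
  intros Hinj. apply NNPP; intro Nwc.
  destruct (W1 A f Hnd Nwc) as [D [HD Hdet]].
  unfold detD in Hdet.
  destruct (ker3 _ _ _ _ _ _ _ _ _ Hdet) as [c1 [c2 [c3 [Nc [R1 [R2 R3]]]]]].
  set (gc := fun a : lpt => c1 * IZR (fst a) + c2 * IZR (snd a) + c3).
  assert (Row : forall i, MD A f D i 1 * c1 + MD A f D i 2 * c2 + MD A f D i 3 * c3 =
                 sumR A (fun a => D a * gc a * PP f i a)).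
  { intros i. unfold MD. rewrite <- !sumR_scal_r, <- !sumR_plus. apply sumR_ext; intros; unfold gc, QQ; ring. }
  rewrite Row in R1, R2, R3. unfold PP in R1, R2, R3.
  destruct Hpoly as [a0 [a1 [a2 [Ha0 _]]]].
  assert (SD : 0 < sumR A D) by (apply (sumR_pos A D a0); auto; intros; left; auto).
  assert (Ncl : ~ (c1 = 0 /\ c2 = 0)).
  { intros [E1 E2]. unfold gc in R3. rewrite E1, E2 in R3.
    rewrite (sumR_ext A _ (fun a => c3 * D a)) in R3 by (intros; ring).
    rewrite sumR_scal in R3. apply Rmult_integral in R3. destruct R3 as [R3|R3]; [|lra].
    destruct Nc as [N|[N|N]]; contradiction. }
  destruct (interior_pt A H Hnd Hed Hpoly) as [x0 [Hx0 Ix0]].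
  destruct (W4 A H Hnd Hed Hpoly x0 c1 c2 Ix0 Ncl) as [y0 [mu [Nxy [Py0 [Nmu [L1 L2]]]]]].
  assert (Px0 : forall h, In h H -> 0 < hval h x0) by (intros h Hh; specialize (Ix0 h Hh); lra).
  assert (Hy0 : in_hull A y0) by (apply (ed_hull A H Hed); intros h Hh; left; auto).
  assert (Sx : forall a, inS H x0 a) by (intros a h Hh E; specialize (Px0 h Hh); lra).
  assert (Sy : forall a, inS H y0 a) by (intros a h Hh E; specialize (Py0 h Hh); lra).
  set (g := fun a => mu * gc a).
  set (u := fun a => if Req_EM_T (g a) 0 then D a else D a * g a / (exp (g a) - 1)).
  assert (Hu : forall a, 0 < u a /\ D a * g a = u a * (exp (g a) - 1)).
  { intros a. unfold u. destruct (Req_EM_T (g a) 0) as [E|E].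
    - rewrite E, exp_0. split; [auto|ring].
    - destruct (Rtotal_order (g a) 0) as [L|[L|L]]; [|contradiction|].
      + assert (exp (g a) < 1) by (rewrite <- exp_0; apply exp_increasing; auto).
        split; [|field; lra].
        replace (D a * g a / (exp (g a) - 1)) with ((D a * (- g a)) / (1 - exp (g a))) by (field; lra).
        apply Rdiv_lt_0_compat; [apply Rmult_lt_0_compat; [auto|lra]|lra].
      + assert (1 < exp (g a)) by (rewrite <- exp_0; apply exp_increasing; auto).
        split; [|field; lra].
        apply Rdiv_lt_0_compat; [apply Rmult_lt_0_compat; auto|lra]. }
  set (w := fun a => u a / beta H a x0).
  assert (Bx : forall a, In a A -> 0 < beta H a x0) by (intros; apply (beta_pos A H Hed); auto).
  assert (Hw : pos_weights A w).
  { intros a Ha. unfold w. apply Rdiv_lt_0_compat; [apply Hu|auto]. }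
  set (Kc := sumR H (fun h => ln (hval h y0 / hval h x0) * cz h)).
  assert (By : forall a, In a A -> w a * beta H a y0 = u a * exp (g a) * exp (Kc - mu * c3)).
  { intros a Ha. rewrite (beta_ratio A H Hnd Hed x0 y0 a Hx0 Hy0 Ha (Sx a) (Sy a)).
    assert (E : sumR H (fun h => Lc x0 y0 h * hval h (toR a)) = g a + (Kc - mu * c3)).
    { rewrite (sumR_ext H _ (fun h => IZR (fst a) * (ln (hval h y0 / hval h x0) * nx h) +
          IZR (snd a) * (ln (hval h y0 / hval h x0) * ny h) + ln (hval h y0 / hval h x0) * cz h)).
      - rewrite !sumR_plus, !sumR_scal. fold Kc. rewrite L1, L2. unfold g, gc. ring.
      - intros h Hh. unfold Lc. destruct (Rlt_dec 0 (hval h x0)); [|specialize (Px0 h Hh); lra].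
        destruct (Rlt_dec 0 (hval h y0)); [|specialize (Py0 h Hh); lra].
        rewrite (hval_eq h (toR a)). unfold toR; simpl. ring. }
    rewrite E, exp_plus. unfold w. field. specialize (Bx a Ha). lra. }
  assert (Bx' : forall a, In a A -> w a * beta H a x0 = u a).
  { intros a Ha. unfold w. field. specialize (Bx a Ha). lra. }
  set (C := exp (Kc - mu * c3)).
  assert (Cp : 0 < C) by apply exp_pos.
  assert (Z0 : sumR A (fun a => u a * exp (g a)) = sumR A u).
  { assert (sumR A (fun a => D a * g a) = 0).
    { rewrite (sumR_ext A _ (fun a => mu * (D a * gc a * 1))) by (intros; unfold g; ring).
      rewrite sumR_scal, R3. ring. }
    rewrite (sumR_ext A _ (fun a => u a + D a * g a)); [rewrite sumR_plus; lra|].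
    intros a _. destruct (Hu a) as [_ E]. rewrite E. ring. }
  assert (Z1 : sumR A (fun a => u a * exp (g a) * fst (f a)) = sumR A (fun a => u a * fst (f a))).
  { assert (sumR A (fun a => D a * g a * fst (f a)) = 0).
    { rewrite (sumR_ext A _ (fun a => mu * (D a * gc a * fst (f a)))) by (intros; unfold g; ring).
      rewrite sumR_scal, R1. ring. }
    rewrite (sumR_ext A _ (fun a => u a * fst (f a) + D a * g a * fst (f a))); [rewrite sumR_plus; lra|].
    intros a _. destruct (Hu a) as [_ E]. rewrite E. ring. }
  assert (Z2 : sumR A (fun a => u a * exp (g a) * snd (f a)) = sumR A (fun a => u a * snd (f a))).
  { assert (sumR A (fun a => D a * g a * snd (f a)) = 0).
    { rewrite (sumR_ext A _ (fun a => mu * (D a * gc a * snd (f a)))) by (intros; unfold g; ring).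
      rewrite sumR_scal, R2. ring. }
    rewrite (sumR_ext A _ (fun a => u a * snd (f a) + D a * g a * snd (f a))); [rewrite sumR_plus; lra|].
    intros a _. destruct (Hu a) as [_ E]. rewrite E. ring. }
  assert (Su : 0 < sumR A u) by (apply (sumR_pos A u a0); [intros; left; apply (proj1 (Hu _))|auto|apply (proj1 (Hu _))]).
  apply Nxy. symmetry. apply (Hinj w Hw x0 y0 Hx0 Hy0).
  unfold patch.
  rewrite (sumR_ext A (fun a => w a * beta H a x0) u) by (intros; apply Bx'; auto).
  rewrite (sumR_ext A (fun a => w a * fst (f a) * beta H a x0) (fun a => u a * fst (f a)))
    by (intros a Ha; rewrite <- (Bx' a Ha); ring).
  rewrite (sumR_ext A (fun a => w a * snd (f a) * beta H a x0) (fun a => u a * snd (f a)))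
    by (intros a Ha; rewrite <- (Bx' a Ha); ring).
  rewrite (sumR_ext A (fun a => w a * beta H a y0) (fun a => C * (u a * exp (g a))))
    by (intros a Ha; rewrite (By a Ha); unfold C; ring).
  rewrite (sumR_ext A (fun a => w a * fst (f a) * beta H a y0) (fun a => C * (u a * exp (g a) * fst (f a))))
    by (intros a Ha; replace (w a * fst (f a) * beta H a y0) with (w a * beta H a y0 * fst (f a)) by ring;
        rewrite (By a Ha); unfold C; ring).
  rewrite (sumR_ext A (fun a => w a * snd (f a) * beta H a y0) (fun a => C * (u a * exp (g a) * snd (f a))))
    by (intros a Ha; replace (w a * snd (f a) * beta H a y0) with (w a * beta H a y0 * snd (f a)) by ring;
        rewrite (By a Ha); unfold C; ring).
  rewrite !sumR_scal, Z0, Z1, Z2. f_equal; field; lra.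
Qed.

End W5.

Theorem theorem2 (A : list lpt) (H : list aform) (f : lpt -> pt) :
  NoDup A -> is_polygon A -> edge_data A H ->
  ((forall w : lpt -> R, pos_weights A w -> injective_on_hull A (patch A H w f))
   <-> compatible A f).
Proof.
  intros Hnd Hpoly Hed. split.
  - intros Hinj. split.
    + apply dir2_wc with H; auto.
    + apply (dir2_vert A H f Hnd Hed Hinj).
  - intros Hc. apply dir1; auto.
Qed.
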